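(* Let $\gamma\in\Phi_l$, $x\in\mathfrak g_s$ and $\lambda\in\bar{\mathbb F}_2$. Then the element $x+\lambda X_\gamma\in\mathfrak g$ (under the adjoint action) and the element $x+\lambda v_\gamma\in V$ have the same stabilizer in $G$, where $x$ is regarded as an element of $V$ via $\mathfrak g_s\subset V$.
   Context: Let $G=F_4(\bar{\mathbb F}_2)$, $\Phi=\Phi_s\sqcup\Phi_l$ its roots (short/long), and fix a Chevalley basis $\{X_\alpha,H_{\alpha_i}\}$ of the adjoint representation $\mathfrak g$. Let $\mathfrak g_s\subset\mathfrak g$ be the $G$-stable span of $H_{\alpha_3},H_{\alpha_4}$ ($\alpha_3,\alpha_4$ the short simple roots) and $X_\alpha$, $\alpha\in\Phi_s$; $V:=\mathfrak g_s\oplus\mathfrak g/\mathfrak g_s$, and $v_\gamma\in V_\gamma\cong\mathfrak g_\gamma$ is the element corresponding to $X_\gamma$ (for $\gamma$ long, $v_\gamma$ is the image of $X_\gamma$ in $\mathfrak g/\mathfrak g_s$). *)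

(* Defs.v *)
(* The adjoint Chevalley group F_4(k) over k = \bar F_2, realized
   concretely as 52x52 matrices acting on the Chevalley basis of g = Lie(F_4). *)
From HB Require Import structures.
From mathcomp Require Import all_boot all_order all_algebra.
Set Implicit Arguments. Unset Strict Implicit. Unset Printing Implicit Defensive.
Import Order.TTheory GRing.Theory Num.Theory.
Local Open Scope ring_scope.

(** * Root system of F_4 (Bourbaki numbering: alpha_1, alpha_2 long, alpha_3, alpha_4 short).
    Roots are coordinate vectors (length 4) w.r.t. the simple roots. *)

Definition vadd (a b : seq int) : seq int := [seq x.1 + x.2 | x <- zip a b].
Definition vscale (c : int) (a : seq int) : seq int := [seq c * x | x <- a].
Definition vsub (a b : seq int) : seq int := vadd a (vscale (-1) b).

(* twice the W-invariant form: (a_i,a_i) = 2 for long, 1 for short simple roots *)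
Definition Bmat : seq (seq int) :=
  [:: [:: 4; -2; 0; 0]; [:: -2; 4; -2; 0]; [:: 0; -2; 2; -1]; [:: 0; 0; -1; 2]].
Definition Bf (a b : seq int) : int :=
  foldr +%R 0 [seq a`_i * (nth [::] Bmat i)`_j * b`_j | i <- iota 0 4, j <- iota 0 4].

Definition simpleRoot (m : nat) : seq int := [seq (i == m)%:Z | i <- iota 0 4].

Definition posShort : seq (seq int) :=
  [:: [:: 0; 0; 0; 1]; [:: 0; 0; 1; 0]; [:: 0; 0; 1; 1]; [:: 0; 1; 1; 0];
      [:: 0; 1; 1; 1]; [:: 1; 1; 1; 0]; [:: 0; 1; 2; 1]; [:: 1; 1; 1; 1];
      [:: 1; 1; 2; 1]; [:: 1; 2; 2; 1]; [:: 1; 2; 3; 1]; [:: 1; 2; 3; 2]].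
Definition posLong : seq (seq int) :=
  [:: [:: 0; 1; 0; 0]; [:: 1; 0; 0; 0]; [:: 1; 1; 0; 0]; [:: 0; 1; 2; 0];
      [:: 1; 1; 2; 0]; [:: 0; 1; 2; 2]; [:: 1; 2; 2; 0]; [:: 1; 1; 2; 2];
      [:: 1; 2; 2; 2]; [:: 1; 2; 4; 2]; [:: 1; 3; 4; 2]; [:: 2; 3; 4; 2]].

Definition shortRoots : seq (seq int) := posShort ++ map (vscale (-1)) posShort.
Definition longRoots : seq (seq int) := posLong ++ map (vscale (-1)) posLong.
Definition F4roots : seq (seq int) := shortRoots ++ longRoots.
Definition isRoot (a : seq int) : bool := a \in F4roots.

(* p(alpha,beta) = largest p >= 0 with beta - p alpha a root (strings have length <= 3 in F_4) *)
Fixpoint pstr_aux (fuel : nat) (a b : seq int) : nat :=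
  if fuel is n.+1 then
    (if isRoot (vsub b a) then (pstr_aux n a (vsub b a)).+1 else 0%N)
  else 0%N.
Definition pstr (a b : seq int) : nat := pstr_aux 4 a b.

Definition cartan (b : seq int) (m : nat) : int :=
  ((2 * Bf b (simpleRoot m)) %/ Bf (simpleRoot m) (simpleRoot m))%Z.
(* coefficient of alpha_m^vee in alpha^vee = 2 alpha/(alpha,alpha) *)
Definition corootCoef (a : seq int) (m : nat) : int :=
  ((a`_m * Bf (simpleRoot m) (simpleRoot m)) %/ Bf a a)%Z.

(** * The Chevalley basis of g, indexed by 'I_52.
    0,1   : H_{alpha_3}, H_{alpha_4}
    2..25 : X_alpha, alpha short (in the order of shortRoots)
    --- indices 0..25 span g_s ---
    26,27 : H_{alpha_1}, H_{alpha_2}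
    28..51: X_alpha, alpha long (in the order of longRoots) *)

Definition dimg : nat := 52.
Definition dims : nat := 26.

Definition basisRoot (i : nat) : option (seq int) :=
  if (i < 2)%N then None
  else if (i < 26)%N then Some (nth [::] shortRoots (i - 2))
  else if (i < 28)%N then None
  else if (i < 52)%N then Some (nth [::] longRoots (i - 28))
  else None.

(* index m (0-based simple root number) of the basis element H_{alpha_m} *)
Definition basisH (i : nat) : option nat :=
  if i == 0%N then Some 2%N else if i == 1%N then Some 3%N
  else if i == 26%N then Some 0%N else if i == 27%N then Some 1%N else None.

Definition rootIdx (a : seq int) : nat :=
  if a \in shortRoots then (2 + index a shortRoots)%N else (28 + index a longRoots)%N.

(* Integer structure constants: coefficient of e_i in [X_alpha, e_j].
   Signs of the N_{alpha,beta} = +-(p+1) are irrelevant in characteristic 2. *)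
Definition adCoef (a : seq int) (i j : nat) : int :=
  match basisRoot j with
  | Some b =>
      if b == vscale (-1) a then
        (if basisH i is Some m then corootCoef a m else 0)          (* [X_a,X_-a] = H_a *)
      else if isRoot (vadd a b) then
        (if i == rootIdx (vadd a b) then (pstr a b).+1%:Z else 0)   (* N_{a,b} X_{a+b} *)
      else 0
  | None =>
      match basisH j with
      | Some m => if i == rootIdx a then - cartan a m else 0          (* [X_a,H_m] *)
      | None => 0
      end
  end.

(* Coefficient of e_i in ((ad X_alpha)^2 / 2) e_j, computed over Z. *)
Definition ad2Coef (a : seq int) (i j : nat) : int :=
  match basisRoot j with
  | Some b =>
      if b == vscale (-1) a then (if i == rootIdx a then -1 else 0)
      else if isRoot (vadd a b) && isRoot (vadd a (vadd a b)) then
        (if i == rootIdx (vadd a (vadd a b)) then ('C((pstr a b).+2, 2))%:Z else 0)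
      else 0
  | None => 0
  end.

Section Chevalley.
Variable k : fieldType.

Definition adX (a : seq int) : 'M[k]_dimg := \matrix_(i, j) (adCoef a i j)%:~R.
Definition ad2X (a : seq int) : 'M[k]_dimg := \matrix_(i, j) (ad2Coef a i j)%:~R.

(* root element x_alpha(t) = exp(t ad X_alpha) acting on g (divided powers stop at 2) *)
Definition xroot (a : seq int) (t : k) : 'M[k]_dimg :=
  1%:M + t *: adX a + t ^+ 2 *: ad2X a.

Inductive inG : 'M[k]_dimg -> Prop :=
  | inG1 : inG 1%:M
  | inGmul (a : seq int) (t : k) (g : 'M[k]_dimg) :
      a \in F4roots -> inG g -> inG (xroot a t *m g).

Definition in_gs (x : 'cV[k]_dimg) : Prop := forall i : 'I_dimg, (dims <= i)%N -> x i 0 = 0.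

Definition Xv (a : seq int) : 'cV[k]_dimg := \col_(i < dimg) (i == rootIdx a :> nat)%:R.

(** V = g_s (+) g/g_s, with basis: indices 0..25 the basis of g_s, indices 26..51
    the images in g/g_s of the basis vectors 26..51 of g. The action of g in G on V
    is block-diagonal: its restriction to g_s and the induced action on g/g_s. *)
Definition actV (g : 'M[k]_dimg) : 'M[k]_dimg :=
  \matrix_(i, j) (if (i < dims)%N == (j < dims)%N then g i j else 0).

Definition gs_to_V (x : 'cV[k]_dimg) : 'cV[k]_dimg :=
  \col_(i < dimg) (if (i < dims)%N then x i 0 else 0).

Definition vV (a : seq int) : 'cV[k]_dimg := \col_(i < dimg) (i == rootIdx a :> nat)%:R.

Definition stab_g (w : 'cV[k]_dimg) (g : 'M[k]_dimg) : Prop := inG g /\ g *m w = w.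
Definition stab_V (w : 'cV[k]_dimg) (g : 'M[k]_dimg) : Prop := inG g /\ actV g *m w = w.

End Chevalley.

(* Main.v *)
Require Import Defs.
From HB Require Import structures.
From mathcomp Require Import all_boot all_order all_algebra.
From mathcomp Require Import ring.
Import GRing.Theory.
Local Open Scope ring_scope.

Definition oddz (z : int) : bool := (z %% 2)%Z != 0.
Definition rowlf (a : seq int) (i : nat) : seq (nat * nat) :=
  (i, 0%N) :: [seq (j, 1%N) | j <- iota 0 52 & oddz (adCoef a i j)]
            ++ [seq (j, 2%N) | j <- iota 0 52 & oddz (ad2Coef a i j)].
Definition mk (i j : nat) : nat * nat := if (i <= j)%N then (i, j) else (j, i).
Definition prodlf (l1 l2 : seq (nat * nat)) : seq (nat * (nat * nat)) :=
  [seq ((x.2 + y.2)%N, mk x.1 y.1) | x <- l1, y <- l2].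
Definition lhs (rows : seq (seq (nat * nat))) (f : seq (nat * nat)) :=
  flatten [seq prodlf (nth [::] rows p.1) (nth [::] rows p.2) | p <- f].
Definition forms : seq (seq (nat * nat)) :=
  [:: [:: (0, 0); (31, 43); (32, 44); (33, 45); (34, 46); (35, 47); (36, 48)]; [:: (1, 1); (26, 26); (26, 27); (27, 27); (28, 40); (29, 41); (30, 42); (31, 43); (32, 44); (34, 46)]; [:: (2, 2); (33, 43); (35, 44); (36, 46)]; [:: (3, 3); (31, 40); (32, 42); (37, 48)]; [:: (4, 4); (33, 40); (35, 42); (37, 46)]; [:: (5, 5); (28, 31); (34, 41); (38, 47)]; [:: (6, 6); (28, 33); (36, 41); (38, 44)]; [:: (7, 7); (29, 34); (30, 32); (39, 45)]; [:: (8, 8); (31, 33); (37, 41); (38, 42)]; [:: (9, 9); (29, 36); (30, 35); (39, 43)]; [:: (10, 10); (29, 37); (32, 35); (39, 40)]; [:: (11, 11); (28, 39); (30, 38); (34, 36)]; [:: (12, 12); (31, 39); (32, 38); (34, 37)]; [:: (13, 13); (33, 39); (35, 38); (36, 37)]; [:: (14, 14); (31, 45); (32, 47); (34, 48)]; [:: (15, 15); (28, 43); (30, 44); (36, 49)]; [:: (16, 16); (28, 45); (30, 47); (34, 49)]; [:: (17, 17); (29, 46); (35, 50); (40, 43)]; [:: (18, 18); (29, 48); (32, 50); (40, 45)]; [:: (19, 19); (33, 51); (41, 46); (42, 44)]; [:: (20, 20); (29, 49); (30, 50); (43, 45)]; [:: (21, 21); (31, 51); (41, 48); (42, 47)]; [::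 (22, 22); (28, 51); (41, 49); (44, 47)]; [:: (23, 23); (40, 51); (42, 50); (46, 48)]; [:: (24, 24); (43, 51); (44, 50); (46, 49)]; [:: (25, 25); (45, 51); (47, 50); (48, 49)]; [:: (26, 43); (29, 44); (30, 46); (35, 49); (36, 50)]; [:: (26, 44); (27, 44); (28, 46); (33, 49); (36, 51); (41, 43)]; [:: (26, 45); (29, 47); (30, 48); (32, 49); (34, 50)]; [:: (27, 46); (33, 50); (35, 51); (40, 44); (42, 43)]; [:: (26, 47); (27, 47); (28, 48); (31, 49); (34, 51); (41, 45)]; [:: (27, 48); (31, 50); (32, 51); (40, 47); (42, 45)]; [:: (26, 31); (32, 41); (34, 42); (37, 47); (38, 48)]; [:: (26, 32); (27, 32); (29, 31); (34, 40); (37, 45); (39, 48)]; [:: (26, 33); (35, 41); (36, 42); (37, 44); (38, 46)]; [:: (27, 34); (28, 32); (30, 31); (38, 45); (39, 47)]; [:: (26, 35); (27, 35); (29, 33); (36, 40); (37, 43); (39, 46)]; [:: (27, 36); (28, 35); (30, 33); (38, 43); (39, 44)]; [:: (27, 49); (28, 50); (30, 51); (43, 47); (44, 45)]; [:: (26, 50); (27, 50); (29, 51); (40, 49); (43, 48); (45, 46)]; [:: (26, 51); (41, 50); (42, 49); (44, 48); (46, 47)]; [:: (27, 37); (31, 35); (32, 33); (38, 40); (39, 42)]; [:: (26, 38); (27, 38); (28, 37); (31, 36); (33, 34); (39, 41)]; [:: (26, 39); (29, 38); (30, 37); (32, 36); (34, 35)]; [:: (1, 1); (27, 27); (28, 40);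 (30, 42); (31, 43); (32, 44); (36, 48); (37, 49)]; [:: (26, 40); (29, 42); (32, 46); (35, 48); (37, 50)]; [:: (26, 42); (27, 42); (31, 46); (33, 48); (37, 51); (40, 41)]; [:: (1, 1); (26, 26); (27, 27); (28, 40); (29, 41); (31, 43); (34, 46); (35, 47); (38, 50)]; [:: (26, 28); (30, 41); (34, 44); (36, 47); (38, 49)]; [:: (27, 41); (28, 42); (31, 44); (33, 47); (38, 51)]; [:: (1, 1); (26, 26); (29, 41); (30, 42); (32, 44); (33, 45); (34, 46); (39, 51)]; [:: (26, 30); (27, 30); (28, 29); (34, 43); (36, 45); (39, 49)]; [:: (27, 29); (30, 40); (32, 43); (35, 45); (39, 50)]].
Definition certs : seq (seq (seq (nat * nat))) :=
  [:: 
  [:: [:: (0, 0)]; [:: (0, 1); (2, 14)]; [:: (0, 2); (2, 0); (4, 14)]; [:: (0, 3)]; [:: (0, 4); (2, 3)]; [:: (0, 5)]; [:: (0, 6); (2, 5)]; [:: (0, 7)]; [:: (0, 8)]; [:: (0, 9); (2, 7)]; [:: (0, 10)]; [:: (0, 11)]; [:: (0, 12)]; [:: (0, 13); (2, 12)]; [:: (0, 14)]; [:: (0, 15); (2, 16)]; [:: (0, 16)]; [:: (0, 17); (2, 18)]; [:: (0, 18)]; [:: (0, 19); (2, 21)]; [:: (0, 20)]; [:: (0, 21)]; [:: (0, 22)]; [:: (0, 23)]; [:: (0, 24); (2, 25)]; [:: (0, 25)]; [:: (0, 26); (2, 28)]; [:: (0, 27); (2, 30)]; [:: (0, 28)]; [::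 (0, 29); (2, 31)]; [:: (0, 30)]; [:: (0, 31)]; [:: (0, 32)]; [:: (0, 33)]; [:: (0, 34); (2, 32)]; [:: (0, 35)]; [:: (0, 36); (2, 33)]; [:: (0, 37); (2, 35)]; [:: (0, 38)]; [:: (0, 39)]; [:: (0, 40)]; [:: (0, 41)]; [:: (0, 42)]; [:: (0, 43)]; [:: (0, 44); (2, 14)]; [:: (0, 45)]; [:: (0, 46)]; [:: (0, 47); (2, 14)]; [:: (0, 48)]; [:: (0, 49)]; [:: (0, 50); (2, 14)]; [:: (0, 51)]; [:: (0, 52)]]; 
  [:: [:: (0, 0); (2, 15)]; [:: (0, 1)]; [:: (0, 2)]; [:: (0, 3); (2, 44); (4, 15)]; [:: (0, 4); (2, 2)]; [:: (0, 5)]; [:: (0, 6)]; [:: (0, 7)]; [:: (0, 8); (2, 6)]; [:: (0, 9)]; [:: (0, 10); (2, 9)]; [:: (0, 11)]; [:: (0, 12); (2, 11)]; [:: (0, 13)]; [:: (0, 14); (2, 16)]; [:: (0, 15)]; [:: (0, 16)]; [:: (0, 17)]; [:: (0, 18); (2, 20)]; [:: (0, 19)]; [:: (0, 20)]; [:: (0, 21); (2, 22)]; [:: (0, 22)]; [:: (0, 23); (2, 24)]; [:: (0, 24)]; [:: (0, 25)]; [:: (0, 26)]; [:: (0, 27)]; [:: (0, 28)]; [:: (0, 29)]; [:: (0, 30)]; [:: (0, 31); (2, 38)]; [:: (0, 32); (2, 48)]; [:: (0, 33); (2, 51)]; [:: (0, 34)]; [:: (0, 35)]; [:: (0, 36)];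 [:: (0, 37)]; [:: (0, 38)]; [:: (0, 39)]; [:: (0, 40)]; [:: (0, 41); (2, 37)]; [:: (0, 42)]; [:: (0, 43)]; [:: (0, 44)]; [:: (0, 45); (2, 26)]; [:: (0, 46); (2, 27)]; [:: (0, 47)]; [:: (0, 48)]; [:: (0, 49)]; [:: (0, 50)]; [:: (0, 51)]; [:: (0, 52)]]; 
  [:: [:: (0, 0); (2, 16)]; [:: (0, 1); (2, 16)]; [:: (0, 2); (2, 15)]; [:: (0, 3); (2, 14)]; [:: (0, 4); (2, 0); (2, 44); (4, 16)]; [:: (0, 5)]; [:: (0, 6)]; [:: (0, 7)]; [:: (0, 8); (2, 5)]; [:: (0, 9)]; [:: (0, 10); (2, 7)]; [:: (0, 11)]; [:: (0, 12)]; [:: (0, 13); (2, 11)]; [:: (0, 14)]; [:: (0, 15)]; [:: (0, 16)]; [:: (0, 17); (2, 20)]; [:: (0, 18)]; [:: (0, 19); (2, 22)]; [:: (0, 20)]; [:: (0, 21)]; [:: (0, 22)]; [:: (0, 23); (2, 25)]; [:: (0, 24)]; [:: (0, 25)]; [:: (0, 26)]; [:: (0, 27)]; [:: (0, 28)]; [:: (0, 29); (2, 38)]; [:: (0, 30)]; [:: (0, 31)]; [:: (0, 32)]; [:: (0, 33)]; [:: (0, 34); (2, 48)]; [:: (0, 35)]; [:: (0, 36); (2, 51)]; [:: (0, 37)]; [:: (0, 38)]; [:: (0, 39)]; [:: (0, 40)]; [:: (0, 41); (2, 35)]; [:: (0, 42)]; [:: (0, 43)]; [:: (0, 44); (2,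 16)]; [:: (0, 45); (2, 28)]; [:: (0, 46); (2, 30)]; [:: (0, 47); (2, 16)]; [:: (0, 48)]; [:: (0, 49)]; [:: (0, 50); (2, 16)]; [:: (0, 51)]; [:: (0, 52)]]; 
  [:: [:: (0, 0); (2, 17)]; [:: (0, 1)]; [:: (0, 2)]; [:: (0, 3)]; [:: (0, 4)]; [:: (0, 5); (2, 47); (4, 17)]; [:: (0, 6); (2, 2)]; [:: (0, 7)]; [:: (0, 8); (2, 4)]; [:: (0, 9)]; [:: (0, 10)]; [:: (0, 11); (2, 9)]; [:: (0, 12); (2, 10)]; [:: (0, 13)]; [:: (0, 14); (2, 18)]; [:: (0, 15)]; [:: (0, 16); (2, 20)]; [:: (0, 17)]; [:: (0, 18)]; [:: (0, 19)]; [:: (0, 20)]; [:: (0, 21); (2, 23)]; [:: (0, 22); (2, 24)]; [:: (0, 23)]; [:: (0, 24)]; [:: (0, 25)]; [:: (0, 26)]; [:: (0, 27)]; [:: (0, 28)]; [:: (0, 29)]; [:: (0, 30); (2, 39)]; [:: (0, 31)]; [:: (0, 32); (2, 45)]; [:: (0, 33)]; [:: (0, 34)]; [:: (0, 35); (2, 52)]; [:: (0, 36)]; [:: (0, 37)]; [:: (0, 38)]; [:: (0, 39)]; [:: (0, 40)]; [:: (0, 41)]; [:: (0, 42); (2, 36)]; [:: (0, 43)]; [:: (0, 44)]; [:: (0, 45)]; [:: (0, 46)]; [:: (0, 47)]; [:: (0, 48); (2, 26)]; [:: (0, 49); (2, 29)]; [:: (0, 50)]; [:: (0, 51)]; [::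 (0, 52)]]; 
  [:: [:: (0, 0); (2, 18)]; [:: (0, 1); (2, 18)]; [:: (0, 2); (2, 17)]; [:: (0, 3)]; [:: (0, 4)]; [:: (0, 5); (2, 14)]; [:: (0, 6); (2, 0); (2, 47); (4, 18)]; [:: (0, 7)]; [:: (0, 8); (2, 3)]; [:: (0, 9)]; [:: (0, 10)]; [:: (0, 11); (2, 7)]; [:: (0, 12)]; [:: (0, 13); (2, 10)]; [:: (0, 14)]; [:: (0, 15); (2, 20)]; [:: (0, 16)]; [:: (0, 17)]; [:: (0, 18)]; [:: (0, 19); (2, 23)]; [:: (0, 20)]; [:: (0, 21)]; [:: (0, 22); (2, 25)]; [:: (0, 23)]; [:: (0, 24)]; [:: (0, 25)]; [:: (0, 26)]; [:: (0, 27); (2, 39)]; [:: (0, 28)]; [:: (0, 29)]; [:: (0, 30)]; [:: (0, 31)]; [:: (0, 32)]; [:: (0, 33)]; [:: (0, 34); (2, 45)]; [:: (0, 35)]; [:: (0, 36)]; [:: (0, 37); (2, 52)]; [:: (0, 38)]; [:: (0, 39)]; [:: (0, 40)]; [:: (0, 41)]; [:: (0, 42); (2, 33)]; [:: (0, 43)]; [:: (0, 44); (2, 18)]; [:: (0, 45)]; [:: (0, 46)]; [:: (0, 47); (2, 18)]; [:: (0, 48); (2, 28)]; [:: (0, 49); (2, 31)]; [:: (0, 50); (2, 18)]; [:: (0, 51)]; [:: (0, 52)]]; 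
  [:: [:: (0, 0); (2, 19)]; [:: (0, 1)]; [:: (0, 2)]; [:: (0, 3)]; [:: (0, 4)]; [:: (0, 5)]; [:: (0, 6)]; [:: (0, 7); (2, 50); (4, 19)]; [:: (0, 8)]; [:: (0, 9); (2, 2)]; [:: (0, 10); (2, 4)]; [:: (0, 11); (2, 6)]; [:: (0, 12); (2, 8)]; [:: (0, 13)]; [:: (0, 14); (2, 21)]; [:: (0, 15)]; [:: (0, 16); (2, 22)]; [:: (0, 17)]; [:: (0, 18); (2, 23)]; [:: (0, 19)]; [:: (0, 20); (2, 24)]; [:: (0, 21)]; [:: (0, 22)]; [:: (0, 23)]; [:: (0, 24)]; [:: (0, 25)]; [:: (0, 26)]; [:: (0, 27)]; [:: (0, 28); (2, 40)]; [:: (0, 29)]; [:: (0, 30)]; [:: (0, 31)]; [:: (0, 32)]; [:: (0, 33); (2, 46)]; [:: (0, 34)]; [:: (0, 35); (2, 49)]; [:: (0, 36)]; [:: (0, 37)]; [:: (0, 38)]; [:: (0, 39)]; [:: (0, 40)]; [:: (0, 41)]; [:: (0, 42)]; [:: (0, 43); (2, 34)]; [:: (0, 44)]; [:: (0, 45)]; [:: (0, 46)]; [:: (0, 47)]; [:: (0, 48)]; [:: (0, 49)]; [:: (0, 50)]; [:: (0, 51); (2, 27)]; [:: (0, 52); (2, 29)]]; 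
  [:: [:: (0, 0)]; [:: (0, 1); (2, 20)]; [:: (0, 2)]; [:: (0, 3); (2, 18)]; [:: (0, 4); (2, 17)]; [:: (0, 5); (2, 16)]; [:: (0, 6); (2, 15)]; [:: (0, 7)]; [:: (0, 8); (2, 0); (2, 44); (2, 47); (4, 20)]; [:: (0, 9)]; [:: (0, 10)]; [:: (0, 11)]; [:: (0, 12); (2, 7)]; [:: (0, 13); (2, 9)]; [:: (0, 14)]; [:: (0, 15)]; [:: (0, 16)]; [:: (0, 17)]; [:: (0, 18)]; [:: (0, 19); (2, 24)]; [:: (0, 20)]; [:: (0, 21); (2, 25)]; [:: (0, 22)]; [:: (0, 23)]; [:: (0, 24)]; [:: (0, 25)]; [:: (0, 26)]; [:: (0, 27)]; [:: (0, 28)]; [:: (0, 29)]; [:: (0, 30)]; [:: (0, 31)]; [:: (0, 32); (2, 28)]; [:: (0, 33)]; [:: (0, 34); (2, 26)]; [:: (0, 35)]; [:: (0, 36)]; [:: (0, 37)]; [:: (0, 38)]; [:: (0, 39)]; [:: (0, 40)]; [:: (0, 41); (2, 52)]; [:: (0, 42); (2, 51)]; [:: (0, 43)]; [:: (0, 44); (2, 20)]; [:: (0, 45)]; [:: (0, 46); (2, 39)]; [:: (0, 47); (2, 20)]; [:: (0, 48)]; [:: (0, 49); (2, 38)]; [:: (0, 50); (2, 20)]; [:: (0, 51)]; [:: (0, 52)]]; 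
  [:: [:: (0, 0); (2, 21)]; [:: (0, 1); (2, 21)]; [:: (0, 2); (2, 19)]; [:: (0, 3)]; [:: (0, 4)]; [:: (0, 5)]; [:: (0, 6)]; [:: (0, 7); (2, 14)]; [:: (0, 8)]; [:: (0, 9); (2, 0); (2, 50); (4, 21)]; [:: (0, 10); (2, 3)]; [:: (0, 11); (2, 5)]; [:: (0, 12)]; [:: (0, 13); (2, 8)]; [:: (0, 14)]; [:: (0, 15); (2, 22)]; [:: (0, 16)]; [:: (0, 17); (2, 23)]; [:: (0, 18)]; [:: (0, 19)]; [:: (0, 20); (2, 25)]; [:: (0, 21)]; [:: (0, 22)]; [:: (0, 23)]; [:: (0, 24)]; [:: (0, 25)]; [:: (0, 26); (2, 40)]; [:: (0, 27)]; [:: (0, 28)]; [:: (0, 29)]; [:: (0, 30)]; [:: (0, 31)]; [:: (0, 32)]; [:: (0, 33)]; [:: (0, 34)]; [:: (0, 35)]; [:: (0, 36); (2, 46)]; [:: (0, 37); (2, 49)]; [:: (0, 38)]; [:: (0, 39)]; [:: (0, 40)]; [:: (0, 41)]; [:: (0, 42)]; [:: (0, 43); (2, 32)]; [:: (0, 44); (2, 21)]; [:: (0, 45)]; [:: (0, 46)]; [:: (0, 47); (2, 21)]; [:: (0, 48)]; [:: (0, 49)]; [:: (0, 50); (2, 21)]; [:: (0, 51); (2, 30)]; [:: (0, 52); (2, 31)]]; 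
  [:: [:: (0, 0)]; [:: (0, 1); (2, 22)]; [:: (0, 2)]; [:: (0, 3); (2, 21)]; [:: (0, 4); (2, 19)]; [:: (0, 5)]; [:: (0, 6)]; [:: (0, 7); (2, 16)]; [:: (0, 8)]; [:: (0, 9); (2, 15)]; [:: (0, 10); (2, 0); (2, 44); (2, 50); (4, 22)]; [:: (0, 11)]; [:: (0, 12); (2, 5)]; [:: (0, 13); (2, 6)]; [:: (0, 14)]; [:: (0, 15)]; [:: (0, 16)]; [:: (0, 17); (2, 24)]; [:: (0, 18); (2, 25)]; [:: (0, 19)]; [:: (0, 20)]; [:: (0, 21)]; [:: (0, 22)]; [:: (0, 23)]; [:: (0, 24)]; [:: (0, 25)]; [:: (0, 26)]; [:: (0, 27)]; [:: (0, 28)]; [:: (0, 29)]; [:: (0, 30)]; [:: (0, 31)]; [:: (0, 32)]; [:: (0, 33); (2, 30)]; [:: (0, 34)]; [:: (0, 35)]; [:: (0, 36); (2, 27)]; [:: (0, 37)]; [:: (0, 38)]; [:: (0, 39)]; [:: (0, 40)]; [:: (0, 41); (2, 49)]; [:: (0, 42)]; [:: (0, 43); (2, 48)]; [:: (0, 44); (2, 22)]; [:: (0, 45); (2, 40)]; [:: (0, 46)]; [:: (0, 47); (2, 22)]; [:: (0, 48)]; [:: (0, 49)]; [:: (0, 50); (2, 22)]; [:: (0, 51)]; [:: (0, 52); (2, 38)]]; 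
  [:: [:: (0, 0)]; [:: (0, 1); (2, 23)]; [:: (0, 2)]; [:: (0, 3)]; [:: (0, 4)]; [:: (0, 5); (2, 21)]; [:: (0, 6); (2, 19)]; [:: (0, 7); (2, 18)]; [:: (0, 8)]; [:: (0, 9); (2, 17)]; [:: (0, 10)]; [:: (0, 11); (2, 0); (2, 47); (2, 50); (4, 23)]; [:: (0, 12); (2, 3)]; [:: (0, 13); (2, 4)]; [:: (0, 14)]; [:: (0, 15); (2, 24)]; [:: (0, 16); (2, 25)]; [:: (0, 17)]; [:: (0, 18)]; [:: (0, 19)]; [:: (0, 20)]; [:: (0, 21)]; [:: (0, 22)]; [:: (0, 23)]; [:: (0, 24)]; [:: (0, 25)]; [:: (0, 26)]; [:: (0, 27)]; [:: (0, 28)]; [:: (0, 29)]; [:: (0, 30)]; [:: (0, 31)]; [:: (0, 32)]; [:: (0, 33)]; [:: (0, 34)]; [:: (0, 35); (2, 31)]; [:: (0, 36)]; [:: (0, 37); (2, 29)]; [:: (0, 38)]; [:: (0, 39)]; [:: (0, 40)]; [:: (0, 41)]; [:: (0, 42); (2, 46)]; [:: (0, 43); (2, 45)]; [:: (0, 44); (2, 23)]; [:: (0, 45)]; [:: (0, 46)]; [:: (0, 47); (2, 23)]; [:: (0, 48); (2, 40)]; [:: (0, 49)]; [:: (0, 50); (2, 23)]; [:: (0, 51); (2, 39)]; [:: (0, 52)]]; 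
  [:: [:: (0, 0); (2, 24)]; [:: (0, 1); (2, 24)]; [:: (0, 2)]; [:: (0, 3); (2, 23)]; [:: (0, 4)]; [:: (0, 5); (2, 22)]; [:: (0, 6)]; [:: (0, 7); (2, 20)]; [:: (0, 8); (2, 19)]; [:: (0, 9)]; [:: (0, 10); (2, 17)]; [:: (0, 11); (2, 15)]; [:: (0, 12); (2, 0); (2, 44); (2, 47); (2, 50); (4, 24)]; [:: (0, 13); (2, 2)]; [:: (0, 14); (2, 25)]; [:: (0, 15)]; [:: (0, 16)]; [:: (0, 17)]; [:: (0, 18)]; [:: (0, 19)]; [:: (0, 20)]; [:: (0, 21)]; [:: (0, 22)]; [:: (0, 23)]; [:: (0, 24)]; [:: (0, 25)]; [:: (0, 26)]; [:: (0, 27)]; [:: (0, 28)]; [:: (0, 29)]; [:: (0, 30)]; [:: (0, 31)]; [:: (0, 32); (2, 40)]; [:: (0, 33); (2, 39)]; [:: (0, 34)]; [:: (0, 35); (2, 38)]; [:: (0, 36)]; [:: (0, 37)]; [:: (0, 38)]; [:: (0, 39)]; [:: (0, 40)]; [:: (0, 41); (2, 29)]; [:: (0, 42); (2, 27)]; [:: (0, 43); (2, 26)]; [:: (0, 44); (2, 24)]; [:: (0, 45)]; [:: (0, 46)]; [:: (0, 47); (2, 24)]; [:: (0, 48)]; [:: (0, 49)]; [:: (0, 50); (2, 24)]; [:: (0, 51)]; [:: (0, 52)]]; 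
  [:: [:: (0, 0); (2, 25)]; [:: (0, 1)]; [:: (0, 2); (2, 24)]; [:: (0, 3)]; [:: (0, 4); (2, 23)]; [:: (0, 5)]; [:: (0, 6); (2, 22)]; [:: (0, 7)]; [:: (0, 8); (2, 21)]; [:: (0, 9); (2, 20)]; [:: (0, 10); (2, 18)]; [:: (0, 11); (2, 16)]; [:: (0, 12); (2, 14)]; [:: (0, 13); (2, 44); (2, 47); (2, 50); (4, 25)]; [:: (0, 14)]; [:: (0, 15)]; [:: (0, 16)]; [:: (0, 17)]; [:: (0, 18)]; [:: (0, 19)]; [:: (0, 20)]; [:: (0, 21)]; [:: (0, 22)]; [:: (0, 23)]; [:: (0, 24)]; [:: (0, 25)]; [:: (0, 26)]; [:: (0, 27)]; [:: (0, 28)]; [:: (0, 29)]; [:: (0, 30)]; [:: (0, 31)]; [:: (0, 32)]; [:: (0, 33)]; [:: (0, 34); (2, 40)]; [:: (0, 35)]; [:: (0, 36); (2, 39)]; [:: (0, 37); (2, 38)]; [:: (0, 38)]; [:: (0, 39)]; [:: (0, 40)]; [:: (0, 41); (2, 31)]; [:: (0, 42); (2, 30)]; [:: (0, 43); (2, 28)]; [:: (0, 44)]; [:: (0, 45)]; [:: (0, 46)]; [:: (0, 47)]; [:: (0, 48)]; [:: (0, 49)]; [:: (0, 50)]; [:: (0, 51)]; [:: (0, 52)]]; 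
  [:: [:: (0, 0)]; [:: (0, 1); (2, 2)]; [:: (0, 2)]; [:: (0, 3); (2, 4)]; [:: (0, 4)]; [:: (0, 5); (2, 6)]; [:: (0, 6)]; [:: (0, 7); (2, 9)]; [:: (0, 8)]; [:: (0, 9)]; [:: (0, 10)]; [:: (0, 11)]; [:: (0, 12); (2, 13)]; [:: (0, 13)]; [:: (0, 14); (2, 0); (4, 2)]; [:: (0, 15)]; [:: (0, 16); (2, 15)]; [:: (0, 17)]; [:: (0, 18); (2, 17)]; [:: (0, 19)]; [:: (0, 20)]; [:: (0, 21); (2, 19)]; [:: (0, 22)]; [:: (0, 23)]; [:: (0, 24)]; [:: (0, 25); (2, 24)]; [:: (0, 26)]; [:: (0, 27)]; [:: (0, 28); (2, 26)]; [:: (0, 29)]; [:: (0, 30); (2, 27)]; [:: (0, 31); (2, 29)]; [:: (0, 32); (2, 34)]; [:: (0, 33); (2, 36)]; [:: (0, 34)]; [:: (0, 35); (2, 37)]; [:: (0, 36)]; [:: (0, 37)]; [:: (0, 38)]; [:: (0, 39)]; [:: (0, 40)]; [:: (0, 41)]; [:: (0, 42)]; [:: (0, 43)]; [:: (0, 44); (2, 2)]; [:: (0, 45)]; [:: (0, 46)]; [:: (0, 47); (2, 2)]; [:: (0, 48)]; [:: (0, 49)]; [:: (0, 50); (2, 2)]; [:: (0, 51)]; [:: (0, 52)]]; 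
  [:: [:: (0, 0); (2, 3)]; [:: (0, 1)]; [:: (0, 2); (2, 4)]; [:: (0, 3)]; [:: (0, 4)]; [:: (0, 5)]; [:: (0, 6); (2, 8)]; [:: (0, 7)]; [:: (0, 8)]; [:: (0, 9); (2, 10)]; [:: (0, 10)]; [:: (0, 11); (2, 12)]; [:: (0, 12)]; [:: (0, 13)]; [:: (0, 14)]; [:: (0, 15); (2, 44); (4, 3)]; [:: (0, 16); (2, 14)]; [:: (0, 17)]; [:: (0, 18)]; [:: (0, 19)]; [:: (0, 20); (2, 18)]; [:: (0, 21)]; [:: (0, 22); (2, 21)]; [:: (0, 23)]; [:: (0, 24); (2, 23)]; [:: (0, 25)]; [:: (0, 26); (2, 45)]; [:: (0, 27); (2, 46)]; [:: (0, 28)]; [:: (0, 29)]; [:: (0, 30)]; [:: (0, 31)]; [:: (0, 32)]; [:: (0, 33)]; [:: (0, 34)]; [:: (0, 35)]; [:: (0, 36)]; [:: (0, 37); (2, 41)]; [:: (0, 38); (2, 31)]; [:: (0, 39)]; [:: (0, 40)]; [:: (0, 41)]; [:: (0, 42)]; [:: (0, 43)]; [:: (0, 44)]; [:: (0, 45)]; [:: (0, 46)]; [:: (0, 47)]; [:: (0, 48); (2, 32)]; [:: (0, 49)]; [:: (0, 50)]; [:: (0, 51); (2, 33)]; [:: (0, 52)]]; 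
  [:: [:: (0, 0); (2, 4)]; [:: (0, 1); (2, 4)]; [:: (0, 2)]; [:: (0, 3)]; [:: (0, 4)]; [:: (0, 5); (2, 8)]; [:: (0, 6)]; [:: (0, 7); (2, 10)]; [:: (0, 8)]; [:: (0, 9)]; [:: (0, 10)]; [:: (0, 11); (2, 13)]; [:: (0, 12)]; [:: (0, 13)]; [:: (0, 14); (2, 3)]; [:: (0, 15); (2, 2)]; [:: (0, 16); (2, 0); (2, 44); (4, 4)]; [:: (0, 17)]; [:: (0, 18)]; [:: (0, 19)]; [:: (0, 20); (2, 17)]; [:: (0, 21)]; [:: (0, 22); (2, 19)]; [:: (0, 23)]; [:: (0, 24)]; [:: (0, 25); (2, 23)]; [:: (0, 26)]; [:: (0, 27)]; [:: (0, 28); (2, 45)]; [:: (0, 29)]; [:: (0, 30); (2, 46)]; [:: (0, 31)]; [:: (0, 32)]; [:: (0, 33)]; [:: (0, 34)]; [:: (0, 35); (2, 41)]; [:: (0, 36)]; [:: (0, 37)]; [:: (0, 38); (2, 29)]; [:: (0, 39)]; [:: (0, 40)]; [:: (0, 41)]; [:: (0, 42)]; [:: (0, 43)]; [:: (0, 44); (2, 4)]; [:: (0, 45)]; [:: (0, 46)]; [:: (0, 47); (2, 4)]; [:: (0, 48); (2, 34)]; [:: (0, 49)]; [:: (0, 50); (2, 4)]; [:: (0, 51); (2, 36)]; [:: (0, 52)]]; 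
  [:: [:: (0, 0); (2, 5)]; [:: (0, 1)]; [:: (0, 2); (2, 6)]; [:: (0, 3)]; [:: (0, 4); (2, 8)]; [:: (0, 5)]; [:: (0, 6)]; [:: (0, 7)]; [:: (0, 8)]; [:: (0, 9); (2, 11)]; [:: (0, 10); (2, 12)]; [:: (0, 11)]; [:: (0, 12)]; [:: (0, 13)]; [:: (0, 14)]; [:: (0, 15)]; [:: (0, 16)]; [:: (0, 17); (2, 47); (4, 5)]; [:: (0, 18); (2, 14)]; [:: (0, 19)]; [:: (0, 20); (2, 16)]; [:: (0, 21)]; [:: (0, 22)]; [:: (0, 23); (2, 21)]; [:: (0, 24); (2, 22)]; [:: (0, 25)]; [:: (0, 26); (2, 48)]; [:: (0, 27)]; [:: (0, 28)]; [:: (0, 29); (2, 49)]; [:: (0, 30)]; [:: (0, 31)]; [:: (0, 32)]; [:: (0, 33)]; [:: (0, 34)]; [:: (0, 35)]; [:: (0, 36); (2, 42)]; [:: (0, 37)]; [:: (0, 38)]; [:: (0, 39); (2, 30)]; [:: (0, 40)]; [:: (0, 41)]; [:: (0, 42)]; [:: (0, 43)]; [:: (0, 44)]; [:: (0, 45); (2, 32)]; [:: (0, 46)]; [:: (0, 47)]; [:: (0, 48)]; [:: (0, 49)]; [:: (0, 50)]; [:: (0, 51)]; [:: (0, 52); (2, 35)]]; 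
  [:: [:: (0, 0); (2, 6)]; [:: (0, 1); (2, 6)]; [:: (0, 2)]; [:: (0, 3); (2, 8)]; [:: (0, 4)]; [:: (0, 5)]; [:: (0, 6)]; [:: (0, 7); (2, 11)]; [:: (0, 8)]; [:: (0, 9)]; [:: (0, 10); (2, 13)]; [:: (0, 11)]; [:: (0, 12)]; [:: (0, 13)]; [:: (0, 14); (2, 5)]; [:: (0, 15)]; [:: (0, 16)]; [:: (0, 17); (2, 2)]; [:: (0, 18); (2, 0); (2, 47); (4, 6)]; [:: (0, 19)]; [:: (0, 20); (2, 15)]; [:: (0, 21)]; [:: (0, 22)]; [:: (0, 23); (2, 19)]; [:: (0, 24)]; [:: (0, 25); (2, 22)]; [:: (0, 26)]; [:: (0, 27)]; [:: (0, 28); (2, 48)]; [:: (0, 29)]; [:: (0, 30)]; [:: (0, 31); (2, 49)]; [:: (0, 32)]; [:: (0, 33); (2, 42)]; [:: (0, 34)]; [:: (0, 35)]; [:: (0, 36)]; [:: (0, 37)]; [:: (0, 38)]; [:: (0, 39); (2, 27)]; [:: (0, 40)]; [:: (0, 41)]; [:: (0, 42)]; [:: (0, 43)]; [:: (0, 44); (2, 6)]; [:: (0, 45); (2, 34)]; [:: (0, 46)]; [:: (0, 47); (2, 6)]; [:: (0, 48)]; [:: (0, 49)]; [:: (0, 50); (2, 6)]; [:: (0, 51)]; [:: (0, 52); (2, 37)]]; 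
  [:: [:: (0, 0); (2, 7)]; [:: (0, 1)]; [:: (0, 2); (2, 9)]; [:: (0, 3)]; [:: (0, 4); (2, 10)]; [:: (0, 5)]; [:: (0, 6); (2, 11)]; [:: (0, 7)]; [:: (0, 8); (2, 12)]; [:: (0, 9)]; [:: (0, 10)]; [:: (0, 11)]; [:: (0, 12)]; [:: (0, 13)]; [:: (0, 14)]; [:: (0, 15)]; [:: (0, 16)]; [:: (0, 17)]; [:: (0, 18)]; [:: (0, 19); (2, 50); (4, 7)]; [:: (0, 20)]; [:: (0, 21); (2, 14)]; [:: (0, 22); (2, 16)]; [:: (0, 23); (2, 18)]; [:: (0, 24); (2, 20)]; [:: (0, 25)]; [:: (0, 26)]; [:: (0, 27); (2, 51)]; [:: (0, 28)]; [:: (0, 29); (2, 52)]; [:: (0, 30)]; [:: (0, 31)]; [:: (0, 32)]; [:: (0, 33)]; [:: (0, 34); (2, 43)]; [:: (0, 35)]; [:: (0, 36)]; [:: (0, 37)]; [:: (0, 38)]; [:: (0, 39)]; [:: (0, 40); (2, 28)]; [:: (0, 41)]; [:: (0, 42)]; [:: (0, 43)]; [:: (0, 44)]; [:: (0, 45)]; [:: (0, 46); (2, 33)]; [:: (0, 47)]; [:: (0, 48)]; [:: (0, 49); (2, 35)]; [:: (0, 50)]; [:: (0, 51)]; [:: (0, 52)]]; 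
  [:: [:: (0, 0)]; [:: (0, 1); (2, 8)]; [:: (0, 2)]; [:: (0, 3)]; [:: (0, 4)]; [:: (0, 5)]; [:: (0, 6)]; [:: (0, 7); (2, 12)]; [:: (0, 8)]; [:: (0, 9); (2, 13)]; [:: (0, 10)]; [:: (0, 11)]; [:: (0, 12)]; [:: (0, 13)]; [:: (0, 14)]; [:: (0, 15); (2, 6)]; [:: (0, 16); (2, 5)]; [:: (0, 17); (2, 4)]; [:: (0, 18); (2, 3)]; [:: (0, 19)]; [:: (0, 20); (2, 0); (2, 44); (2, 47); (4, 8)]; [:: (0, 21)]; [:: (0, 22)]; [:: (0, 23)]; [:: (0, 24); (2, 19)]; [:: (0, 25); (2, 21)]; [:: (0, 26); (2, 34)]; [:: (0, 27)]; [:: (0, 28); (2, 32)]; [:: (0, 29)]; [:: (0, 30)]; [:: (0, 31)]; [:: (0, 32)]; [:: (0, 33)]; [:: (0, 34)]; [:: (0, 35)]; [:: (0, 36)]; [:: (0, 37)]; [:: (0, 38); (2, 49)]; [:: (0, 39); (2, 46)]; [:: (0, 40)]; [:: (0, 41)]; [:: (0, 42)]; [:: (0, 43)]; [:: (0, 44); (2, 8)]; [:: (0, 45)]; [:: (0, 46)]; [:: (0, 47); (2, 8)]; [:: (0, 48)]; [:: (0, 49)]; [:: (0, 50); (2, 8)]; [:: (0, 51); (2, 42)]; [:: (0, 52); (2, 41)]]; 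
  [:: [:: (0, 0); (2, 9)]; [:: (0, 1); (2, 9)]; [:: (0, 2)]; [:: (0, 3); (2, 10)]; [:: (0, 4)]; [:: (0, 5); (2, 11)]; [:: (0, 6)]; [:: (0, 7)]; [:: (0, 8); (2, 13)]; [:: (0, 9)]; [:: (0, 10)]; [:: (0, 11)]; [:: (0, 12)]; [:: (0, 13)]; [:: (0, 14); (2, 7)]; [:: (0, 15)]; [:: (0, 16)]; [:: (0, 17)]; [:: (0, 18)]; [:: (0, 19); (2, 2)]; [:: (0, 20)]; [:: (0, 21); (2, 0); (2, 50); (4, 9)]; [:: (0, 22); (2, 15)]; [:: (0, 23); (2, 17)]; [:: (0, 24)]; [:: (0, 25); (2, 20)]; [:: (0, 26)]; [:: (0, 27)]; [:: (0, 28)]; [:: (0, 29)]; [:: (0, 30); (2, 51)]; [:: (0, 31); (2, 52)]; [:: (0, 32); (2, 43)]; [:: (0, 33)]; [:: (0, 34)]; [:: (0, 35)]; [:: (0, 36)]; [:: (0, 37)]; [:: (0, 38)]; [:: (0, 39)]; [:: (0, 40); (2, 26)]; [:: (0, 41)]; [:: (0, 42)]; [:: (0, 43)]; [:: (0, 44); (2, 9)]; [:: (0, 45)]; [:: (0, 46); (2, 36)]; [:: (0, 47); (2, 9)]; [:: (0, 48)]; [:: (0, 49); (2, 37)]; [:: (0, 50); (2, 9)]; [:: (0, 51)]; [:: (0, 52)]]; 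
  [:: [:: (0, 0)]; [:: (0, 1); (2, 10)]; [:: (0, 2)]; [:: (0, 3)]; [:: (0, 4)]; [:: (0, 5); (2, 12)]; [:: (0, 6); (2, 13)]; [:: (0, 7)]; [:: (0, 8)]; [:: (0, 9)]; [:: (0, 10)]; [:: (0, 11)]; [:: (0, 12)]; [:: (0, 13)]; [:: (0, 14)]; [:: (0, 15); (2, 9)]; [:: (0, 16); (2, 7)]; [:: (0, 17)]; [:: (0, 18)]; [:: (0, 19); (2, 4)]; [:: (0, 20)]; [:: (0, 21); (2, 3)]; [:: (0, 22); (2, 0); (2, 44); (2, 50); (4, 10)]; [:: (0, 23)]; [:: (0, 24); (2, 17)]; [:: (0, 25); (2, 18)]; [:: (0, 26)]; [:: (0, 27); (2, 36)]; [:: (0, 28)]; [:: (0, 29)]; [:: (0, 30); (2, 33)]; [:: (0, 31)]; [:: (0, 32)]; [:: (0, 33)]; [:: (0, 34)]; [:: (0, 35)]; [:: (0, 36)]; [:: (0, 37)]; [:: (0, 38); (2, 52)]; [:: (0, 39)]; [:: (0, 40); (2, 45)]; [:: (0, 41)]; [:: (0, 42)]; [:: (0, 43)]; [:: (0, 44); (2, 10)]; [:: (0, 45)]; [:: (0, 46)]; [:: (0, 47); (2, 10)]; [:: (0, 48); (2, 43)]; [:: (0, 49); (2, 41)]; [:: (0, 50); (2, 10)]; [:: (0, 51)]; [:: (0, 52)]]; 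
  [:: [:: (0, 0)]; [:: (0, 1); (2, 11)]; [:: (0, 2)]; [:: (0, 3); (2, 12)]; [:: (0, 4); (2, 13)]; [:: (0, 5)]; [:: (0, 6)]; [:: (0, 7)]; [:: (0, 8)]; [:: (0, 9)]; [:: (0, 10)]; [:: (0, 11)]; [:: (0, 12)]; [:: (0, 13)]; [:: (0, 14)]; [:: (0, 15)]; [:: (0, 16)]; [:: (0, 17); (2, 9)]; [:: (0, 18); (2, 7)]; [:: (0, 19); (2, 6)]; [:: (0, 20)]; [:: (0, 21); (2, 5)]; [:: (0, 22)]; [:: (0, 23); (2, 0); (2, 47); (2, 50); (4, 11)]; [:: (0, 24); (2, 15)]; [:: (0, 25); (2, 16)]; [:: (0, 26)]; [:: (0, 27)]; [:: (0, 28)]; [:: (0, 29); (2, 37)]; [:: (0, 30)]; [:: (0, 31); (2, 35)]; [:: (0, 32)]; [:: (0, 33)]; [:: (0, 34)]; [:: (0, 35)]; [:: (0, 36)]; [:: (0, 37)]; [:: (0, 38)]; [:: (0, 39); (2, 51)]; [:: (0, 40); (2, 48)]; [:: (0, 41)]; [:: (0, 42)]; [:: (0, 43)]; [:: (0, 44); (2, 11)]; [:: (0, 45); (2, 43)]; [:: (0, 46); (2, 42)]; [:: (0, 47); (2, 11)]; [:: (0, 48)]; [:: (0, 49)]; [:: (0, 50); (2, 11)]; [:: (0, 51)]; [:: (0, 52)]]; 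
  [:: [:: (0, 0); (2, 12)]; [:: (0, 1); (2, 12)]; [:: (0, 2); (2, 13)]; [:: (0, 3)]; [:: (0, 4)]; [:: (0, 5)]; [:: (0, 6)]; [:: (0, 7)]; [:: (0, 8)]; [:: (0, 9)]; [:: (0, 10)]; [:: (0, 11)]; [:: (0, 12)]; [:: (0, 13)]; [:: (0, 14)]; [:: (0, 15); (2, 11)]; [:: (0, 16)]; [:: (0, 17); (2, 10)]; [:: (0, 18)]; [:: (0, 19); (2, 8)]; [:: (0, 20); (2, 7)]; [:: (0, 21)]; [:: (0, 22); (2, 5)]; [:: (0, 23); (2, 3)]; [:: (0, 24); (2, 0); (2, 44); (2, 47); (2, 50); (4, 12)]; [:: (0, 25); (2, 14)]; [:: (0, 26); (2, 43)]; [:: (0, 27); (2, 42)]; [:: (0, 28)]; [:: (0, 29); (2, 41)]; [:: (0, 30)]; [:: (0, 31)]; [:: (0, 32)]; [:: (0, 33)]; [:: (0, 34)]; [:: (0, 35)]; [:: (0, 36)]; [:: (0, 37)]; [:: (0, 38); (2, 35)]; [:: (0, 39); (2, 33)]; [:: (0, 40); (2, 32)]; [:: (0, 41)]; [:: (0, 42)]; [:: (0, 43)]; [:: (0, 44); (2, 12)]; [:: (0, 45)]; [:: (0, 46)]; [:: (0, 47); (2, 12)]; [:: (0, 48)]; [:: (0, 49)]; [:: (0, 50); (2, 12)]; [:: (0, 51)]; [:: (0, 52)]]; 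
  [:: [:: (0, 0); (2, 13)]; [:: (0, 1)]; [:: (0, 2)]; [:: (0, 3)]; [:: (0, 4)]; [:: (0, 5)]; [:: (0, 6)]; [:: (0, 7)]; [:: (0, 8)]; [:: (0, 9)]; [:: (0, 10)]; [:: (0, 11)]; [:: (0, 12)]; [:: (0, 13)]; [:: (0, 14); (2, 12)]; [:: (0, 15)]; [:: (0, 16); (2, 11)]; [:: (0, 17)]; [:: (0, 18); (2, 10)]; [:: (0, 19)]; [:: (0, 20); (2, 9)]; [:: (0, 21); (2, 8)]; [:: (0, 22); (2, 6)]; [:: (0, 23); (2, 4)]; [:: (0, 24); (2, 2)]; [:: (0, 25); (2, 44); (2, 47); (2, 50); (4, 13)]; [:: (0, 26)]; [:: (0, 27)]; [:: (0, 28); (2, 43)]; [:: (0, 29)]; [:: (0, 30); (2, 42)]; [:: (0, 31); (2, 41)]; [:: (0, 32)]; [:: (0, 33)]; [:: (0, 34)]; [:: (0, 35)]; [:: (0, 36)]; [:: (0, 37)]; [:: (0, 38); (2, 37)]; [:: (0, 39); (2, 36)]; [:: (0, 40); (2, 34)]; [:: (0, 41)]; [:: (0, 42)]; [:: (0, 43)]; [:: (0, 44)]; [:: (0, 45)]; [:: (0, 46)]; [:: (0, 47)]; [:: (0, 48)]; [:: (0, 49)]; [:: (0, 50)]; [:: (0, 51)]; [:: (0, 52)]]; 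
  [:: [:: (0, 0)]; [:: (0, 1)]; [:: (0, 2)]; [:: (0, 3)]; [:: (0, 4)]; [:: (0, 5); (1, 32); (2, 3)]; [:: (0, 6); (1, 34); (2, 4)]; [:: (0, 7)]; [:: (0, 8)]; [:: (0, 9)]; [:: (0, 10)]; [:: (0, 11); (1, 43); (2, 10)]; [:: (0, 12)]; [:: (0, 13)]; [:: (0, 14)]; [:: (0, 15); (1, 26); (2, 17)]; [:: (0, 16); (1, 28); (2, 18)]; [:: (0, 17)]; [:: (0, 18)]; [:: (0, 19)]; [:: (0, 20)]; [:: (0, 21)]; [:: (0, 22); (1, 40); (2, 23)]; [:: (0, 23)]; [:: (0, 24)]; [:: (0, 25)]; [:: (0, 26)]; [:: (0, 27); (1, 29)]; [:: (0, 28)]; [:: (0, 29)]; [:: (0, 30); (1, 31)]; [:: (0, 31)]; [:: (0, 32)]; [:: (0, 33)]; [:: (0, 34)]; [:: (0, 35); (1, 33)]; [:: (0, 36)]; [:: (0, 37); (1, 36)]; [:: (0, 38); (1, 39)]; [:: (0, 39)]; [:: (0, 40)]; [:: (0, 41)]; [:: (0, 42); (1, 41)]; [:: (0, 43)]; [:: (0, 44); (1, 45)]; [:: (0, 45)]; [:: (0, 46)]; [:: (0, 47); (1, 45)]; [:: (0, 48); (1, 44); (1, 47); (2, 45)]; [:: (0, 49); (1, 46)]; [:: (0, 50)]; [:: (0, 51); (1, 52)]; [:: (0, 52)]]; 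
  [:: [:: (0, 0)]; [:: (0, 1)]; [:: (0, 2)]; [:: (0, 3)]; [:: (0, 4)]; [:: (0, 5)]; [:: (0, 6)]; [:: (0, 7); (1, 35); (2, 5)]; [:: (0, 8)]; [:: (0, 9); (1, 37); (2, 6)]; [:: (0, 10); (1, 41); (2, 8)]; [:: (0, 11)]; [:: (0, 12)]; [:: (0, 13)]; [:: (0, 14)]; [:: (0, 15)]; [:: (0, 16)]; [:: (0, 17); (1, 29); (2, 19)]; [:: (0, 18); (1, 31); (2, 21)]; [:: (0, 19)]; [:: (0, 20); (1, 38); (2, 22)]; [:: (0, 21)]; [:: (0, 22)]; [:: (0, 23)]; [:: (0, 24)]; [:: (0, 25)]; [:: (0, 26); (1, 27)]; [:: (0, 27)]; [:: (0, 28); (1, 30)]; [:: (0, 29)]; [:: (0, 30)]; [:: (0, 31)]; [:: (0, 32)]; [:: (0, 33); (1, 32)]; [:: (0, 34)]; [:: (0, 35)]; [:: (0, 36); (1, 34)]; [:: (0, 37)]; [:: (0, 38)]; [:: (0, 39); (1, 40)]; [:: (0, 40)]; [:: (0, 41)]; [:: (0, 42)]; [:: (0, 43); (1, 42)]; [:: (0, 44)]; [:: (0, 45); (1, 46)]; [:: (0, 46)]; [:: (0, 47); (1, 49)]; [:: (0, 48)]; [:: (0, 49)]; [:: (0, 50); (1, 49)]; [:: (0, 51); (1, 48)]; [:: (0, 52); (1, 47); (1, 50); (2, 49)]]; 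
  [:: [:: (0, 0)]; [:: (0, 1)]; [:: (0, 2)]; [:: (0, 3)]; [:: (0, 4)]; [:: (0, 5)]; [:: (0, 6)]; [:: (0, 7); (1, 33); (2, 3)]; [:: (0, 8)]; [:: (0, 9); (1, 36); (2, 4)]; [:: (0, 10)]; [:: (0, 11); (1, 42); (2, 8)]; [:: (0, 12)]; [:: (0, 13)]; [:: (0, 14)]; [:: (0, 15); (1, 27); (2, 19)]; [:: (0, 16); (1, 30); (2, 21)]; [:: (0, 17)]; [:: (0, 18)]; [:: (0, 19)]; [:: (0, 20); (1, 39); (2, 23)]; [:: (0, 21)]; [:: (0, 22)]; [:: (0, 23)]; [:: (0, 24)]; [:: (0, 25)]; [:: (0, 26); (1, 29)]; [:: (0, 27)]; [:: (0, 28); (1, 31)]; [:: (0, 29)]; [:: (0, 30)]; [:: (0, 31)]; [:: (0, 32)]; [:: (0, 33)]; [:: (0, 34)]; [:: (0, 35); (1, 32)]; [:: (0, 36)]; [:: (0, 37); (1, 34)]; [:: (0, 38); (1, 40)]; [:: (0, 39)]; [:: (0, 40)]; [:: (0, 41)]; [:: (0, 42)]; [:: (0, 43); (1, 41)]; [:: (0, 44); (1, 46)]; [:: (0, 45)]; [:: (0, 46)]; [:: (0, 47)]; [:: (0, 48); (1, 49)]; [:: (0, 49)]; [:: (0, 50); (1, 46)]; [:: (0, 51); (1, 44); (1, 50); (2, 46)]; [:: (0, 52); (1, 45)]]; 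
  [:: [:: (0, 0); (1, 26)]; [:: (0, 1)]; [:: (0, 2)]; [:: (0, 3); (1, 45); (2, 17)]; [:: (0, 4)]; [:: (0, 5); (1, 48); (2, 15)]; [:: (0, 6)]; [:: (0, 7)]; [:: (0, 8); (1, 34); (2, 2)]; [:: (0, 9)]; [:: (0, 10)]; [:: (0, 11)]; [:: (0, 12); (1, 43); (2, 9)]; [:: (0, 13)]; [:: (0, 14); (1, 28); (2, 20)]; [:: (0, 15)]; [:: (0, 16)]; [:: (0, 17)]; [:: (0, 18)]; [:: (0, 19)]; [:: (0, 20)]; [:: (0, 21); (1, 40); (2, 24)]; [:: (0, 22)]; [:: (0, 23)]; [:: (0, 24)]; [:: (0, 25)]; [:: (0, 26)]; [:: (0, 27)]; [:: (0, 28)]; [:: (0, 29)]; [:: (0, 30); (1, 38)]; [:: (0, 31); (1, 39)]; [:: (0, 32); (1, 44); (1, 47); (2, 26)]; [:: (0, 33); (1, 52)]; [:: (0, 34)]; [:: (0, 35); (1, 51)]; [:: (0, 36)]; [:: (0, 37)]; [:: (0, 38)]; [:: (0, 39)]; [:: (0, 40)]; [:: (0, 41); (1, 36)]; [:: (0, 42); (1, 37)]; [:: (0, 43)]; [:: (0, 44); (1, 26)]; [:: (0, 45)]; [:: (0, 46); (1, 29)]; [:: (0, 47); (1, 26)]; [:: (0, 48)]; [:: (0, 49); (1, 27)]; [:: (0, 50)]; [:: (0, 51)]; [:: (0, 52)]]; 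
  [:: [:: (0, 0); (1, 27)]; [:: (0, 1)]; [:: (0, 2)]; [:: (0, 3); (1, 46); (2, 19)]; [:: (0, 4)]; [:: (0, 5)]; [:: (0, 6)]; [:: (0, 7); (1, 51); (2, 15)]; [:: (0, 8)]; [:: (0, 9)]; [:: (0, 10); (1, 36); (2, 2)]; [:: (0, 11)]; [:: (0, 12); (1, 42); (2, 6)]; [:: (0, 13)]; [:: (0, 14); (1, 30); (2, 22)]; [:: (0, 15)]; [:: (0, 16)]; [:: (0, 17)]; [:: (0, 18); (1, 39); (2, 24)]; [:: (0, 19)]; [:: (0, 20)]; [:: (0, 21)]; [:: (0, 22)]; [:: (0, 23)]; [:: (0, 24)]; [:: (0, 25)]; [:: (0, 26)]; [:: (0, 27)]; [:: (0, 28); (1, 38)]; [:: (0, 29)]; [:: (0, 30)]; [:: (0, 31); (1, 40)]; [:: (0, 32); (1, 49)]; [:: (0, 33); (1, 44); (1, 50); (2, 27)]; [:: (0, 34)]; [:: (0, 35); (1, 48)]; [:: (0, 36)]; [:: (0, 37)]; [:: (0, 38)]; [:: (0, 39)]; [:: (0, 40)]; [:: (0, 41); (1, 34)]; [:: (0, 42)]; [:: (0, 43); (1, 37)]; [:: (0, 44); (1, 27)]; [:: (0, 45); (1, 29)]; [:: (0, 46)]; [:: (0, 47)]; [:: (0, 48)]; [:: (0, 49)]; [:: (0, 50); (1, 27)]; [:: (0, 51)]; [:: (0, 52); (1, 26)]]; 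
  [:: [:: (0, 0); (1, 28)]; [:: (0, 1); (1, 28)]; [:: (0, 2); (1, 26); (2, 20)]; [:: (0, 3)]; [:: (0, 4); (1, 45); (2, 18)]; [:: (0, 5)]; [:: (0, 6); (1, 48); (2, 16)]; [:: (0, 7)]; [:: (0, 8); (1, 32); (2, 14)]; [:: (0, 9)]; [:: (0, 10)]; [:: (0, 11)]; [:: (0, 12)]; [:: (0, 13); (1, 43); (2, 7)]; [:: (0, 14)]; [:: (0, 15)]; [:: (0, 16)]; [:: (0, 17)]; [:: (0, 18)]; [:: (0, 19); (1, 40); (2, 25)]; [:: (0, 20)]; [:: (0, 21)]; [:: (0, 22)]; [:: (0, 23)]; [:: (0, 24)]; [:: (0, 25)]; [:: (0, 26)]; [:: (0, 27); (1, 38)]; [:: (0, 28)]; [:: (0, 29); (1, 39)]; [:: (0, 30)]; [:: (0, 31)]; [:: (0, 32)]; [:: (0, 33)]; [:: (0, 34); (1, 44); (1, 47); (2, 28)]; [:: (0, 35)]; [:: (0, 36); (1, 52)]; [:: (0, 37); (1, 51)]; [:: (0, 38)]; [:: (0, 39)]; [:: (0, 40)]; [:: (0, 41); (1, 33)]; [:: (0, 42); (1, 35)]; [:: (0, 43)]; [:: (0, 44)]; [:: (0, 45)]; [:: (0, 46); (1, 31)]; [:: (0, 47)]; [:: (0, 48)]; [:: (0, 49); (1, 30)]; [:: (0, 50); (1, 28)]; [:: (0, 51)]; [:: (0, 52)]]; 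
  [:: [:: (0, 0); (1, 29)]; [:: (0, 1)]; [:: (0, 2)]; [:: (0, 3)]; [:: (0, 4)]; [:: (0, 5); (1, 49); (2, 19)]; [:: (0, 6)]; [:: (0, 7); (1, 52); (2, 17)]; [:: (0, 8)]; [:: (0, 9)]; [:: (0, 10)]; [:: (0, 11); (1, 37); (2, 2)]; [:: (0, 12); (1, 41); (2, 4)]; [:: (0, 13)]; [:: (0, 14); (1, 31); (2, 23)]; [:: (0, 15)]; [:: (0, 16); (1, 38); (2, 24)]; [:: (0, 17)]; [:: (0, 18)]; [:: (0, 19)]; [:: (0, 20)]; [:: (0, 21)]; [:: (0, 22)]; [:: (0, 23)]; [:: (0, 24)]; [:: (0, 25)]; [:: (0, 26)]; [:: (0, 27)]; [:: (0, 28); (1, 39)]; [:: (0, 29)]; [:: (0, 30); (1, 40)]; [:: (0, 31)]; [:: (0, 32); (1, 46)]; [:: (0, 33); (1, 45)]; [:: (0, 34)]; [:: (0, 35); (1, 47); (1, 50); (2, 29)]; [:: (0, 36)]; [:: (0, 37)]; [:: (0, 38)]; [:: (0, 39)]; [:: (0, 40)]; [:: (0, 41)]; [:: (0, 42); (1, 34)]; [:: (0, 43); (1, 36)]; [:: (0, 44)]; [:: (0, 45)]; [:: (0, 46)]; [:: (0, 47); (1, 29)]; [:: (0, 48); (1, 27)]; [:: (0, 49)]; [:: (0, 50); (1, 29)]; [:: (0, 51); (1, 26)]; [:: (0, 52)]]; 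
  [:: [:: (0, 0); (1, 30)]; [:: (0, 1); (1, 30)]; [:: (0, 2); (1, 27); (2, 22)]; [:: (0, 3)]; [:: (0, 4); (1, 46); (2, 21)]; [:: (0, 5)]; [:: (0, 6)]; [:: (0, 7)]; [:: (0, 8)]; [:: (0, 9); (1, 51); (2, 16)]; [:: (0, 10); (1, 33); (2, 14)]; [:: (0, 11)]; [:: (0, 12)]; [:: (0, 13); (1, 42); (2, 5)]; [:: (0, 14)]; [:: (0, 15)]; [:: (0, 16)]; [:: (0, 17); (1, 39); (2, 25)]; [:: (0, 18)]; [:: (0, 19)]; [:: (0, 20)]; [:: (0, 21)]; [:: (0, 22)]; [:: (0, 23)]; [:: (0, 24)]; [:: (0, 25)]; [:: (0, 26); (1, 38)]; [:: (0, 27)]; [:: (0, 28)]; [:: (0, 29); (1, 40)]; [:: (0, 30)]; [:: (0, 31)]; [:: (0, 32)]; [:: (0, 33)]; [:: (0, 34); (1, 49)]; [:: (0, 35)]; [:: (0, 36); (1, 44); (1, 50); (2, 30)]; [:: (0, 37); (1, 48)]; [:: (0, 38)]; [:: (0, 39)]; [:: (0, 40)]; [:: (0, 41); (1, 32)]; [:: (0, 42)]; [:: (0, 43); (1, 35)]; [:: (0, 44)]; [:: (0, 45); (1, 31)]; [:: (0, 46)]; [:: (0, 47); (1, 30)]; [:: (0, 48)]; [:: (0, 49)]; [:: (0, 50)]; [:: (0, 51)]; [:: (0, 52); (1, 28)]]; 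
  [:: [:: (0, 0); (1, 31)]; [:: (0, 1); (1, 31)]; [:: (0, 2); (1, 29); (2, 23)]; [:: (0, 3)]; [:: (0, 4)]; [:: (0, 5)]; [:: (0, 6); (1, 49); (2, 21)]; [:: (0, 7)]; [:: (0, 8)]; [:: (0, 9); (1, 52); (2, 18)]; [:: (0, 10)]; [:: (0, 11); (1, 35); (2, 14)]; [:: (0, 12)]; [:: (0, 13); (1, 41); (2, 3)]; [:: (0, 14)]; [:: (0, 15); (1, 38); (2, 25)]; [:: (0, 16)]; [:: (0, 17)]; [:: (0, 18)]; [:: (0, 19)]; [:: (0, 20)]; [:: (0, 21)]; [:: (0, 22)]; [:: (0, 23)]; [:: (0, 24)]; [:: (0, 25)]; [:: (0, 26); (1, 39)]; [:: (0, 27); (1, 40)]; [:: (0, 28)]; [:: (0, 29)]; [:: (0, 30)]; [:: (0, 31)]; [:: (0, 32)]; [:: (0, 33)]; [:: (0, 34); (1, 46)]; [:: (0, 35)]; [:: (0, 36); (1, 45)]; [:: (0, 37); (1, 47); (1, 50); (2, 31)]; [:: (0, 38)]; [:: (0, 39)]; [:: (0, 40)]; [:: (0, 41)]; [:: (0, 42); (1, 32)]; [:: (0, 43); (1, 33)]; [:: (0, 44); (1, 31)]; [:: (0, 45)]; [:: (0, 46)]; [:: (0, 47)]; [:: (0, 48); (1, 30)]; [:: (0, 49)]; [:: (0, 50)]; [:: (0, 51); (1, 28)]; [:: (0, 52)]]; 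
  [:: [:: (0, 0)]; [:: (0, 1); (1, 38)]; [:: (0, 2)]; [:: (0, 3); (1, 31); (2, 25)]; [:: (0, 4); (1, 29); (2, 24)]; [:: (0, 5)]; [:: (0, 6)]; [:: (0, 7)]; [:: (0, 8); (1, 49); (2, 22)]; [:: (0, 9)]; [:: (0, 10); (1, 52); (2, 20)]; [:: (0, 11)]; [:: (0, 12); (1, 35); (2, 16)]; [:: (0, 13); (1, 37); (2, 15)]; [:: (0, 14)]; [:: (0, 15)]; [:: (0, 16)]; [:: (0, 17)]; [:: (0, 18)]; [:: (0, 19)]; [:: (0, 20)]; [:: (0, 21)]; [:: (0, 22)]; [:: (0, 23)]; [:: (0, 24)]; [:: (0, 25)]; [:: (0, 26)]; [:: (0, 27)]; [:: (0, 28)]; [:: (0, 29)]; [:: (0, 30)]; [:: (0, 31)]; [:: (0, 32); (1, 30)]; [:: (0, 33); (1, 28)]; [:: (0, 34); (1, 27)]; [:: (0, 35)]; [:: (0, 36); (1, 26)]; [:: (0, 37)]; [:: (0, 38)]; [:: (0, 39)]; [:: (0, 40)]; [:: (0, 41); (1, 47); (1, 50); (2, 38)]; [:: (0, 42); (1, 48)]; [:: (0, 43); (1, 51)]; [:: (0, 44); (1, 38)]; [:: (0, 45); (1, 39)]; [:: (0, 46); (1, 40)]; [:: (0, 47)]; [:: (0, 48)]; [:: (0, 49)]; [:: (0, 50)]; [:: (0, 51)]; [:: (0, 52)]]; 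
  [:: [:: (0, 0)]; [:: (0, 1); (1, 39)]; [:: (0, 2)]; [:: (0, 3)]; [:: (0, 4)]; [:: (0, 5); (1, 30); (2, 25)]; [:: (0, 6); (1, 27); (2, 24)]; [:: (0, 7)]; [:: (0, 8); (1, 46); (2, 23)]; [:: (0, 9)]; [:: (0, 10)]; [:: (0, 11); (1, 51); (2, 20)]; [:: (0, 12); (1, 33); (2, 18)]; [:: (0, 13); (1, 36); (2, 17)]; [:: (0, 14)]; [:: (0, 15)]; [:: (0, 16)]; [:: (0, 17)]; [:: (0, 18)]; [:: (0, 19)]; [:: (0, 20)]; [:: (0, 21)]; [:: (0, 22)]; [:: (0, 23)]; [:: (0, 24)]; [:: (0, 25)]; [:: (0, 26)]; [:: (0, 27)]; [:: (0, 28)]; [:: (0, 29)]; [:: (0, 30)]; [:: (0, 31)]; [:: (0, 32); (1, 31)]; [:: (0, 33)]; [:: (0, 34); (1, 29)]; [:: (0, 35); (1, 28)]; [:: (0, 36)]; [:: (0, 37); (1, 26)]; [:: (0, 38)]; [:: (0, 39)]; [:: (0, 40)]; [:: (0, 41); (1, 45)]; [:: (0, 42); (1, 44); (1, 50); (2, 39)]; [:: (0, 43); (1, 52)]; [:: (0, 44)]; [:: (0, 45)]; [:: (0, 46)]; [:: (0, 47); (1, 39)]; [:: (0, 48); (1, 38)]; [:: (0, 49); (1, 40)]; [:: (0, 50)]; [:: (0, 51)]; [:: (0, 52)]]; 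
  [:: [:: (0, 0)]; [:: (0, 1); (1, 40)]; [:: (0, 2)]; [:: (0, 3)]; [:: (0, 4)]; [:: (0, 5)]; [:: (0, 6)]; [:: (0, 7); (1, 28); (2, 25)]; [:: (0, 8)]; [:: (0, 9); (1, 26); (2, 24)]; [:: (0, 10); (1, 45); (2, 23)]; [:: (0, 11); (1, 48); (2, 22)]; [:: (0, 12); (1, 32); (2, 21)]; [:: (0, 13); (1, 34); (2, 19)]; [:: (0, 14)]; [:: (0, 15)]; [:: (0, 16)]; [:: (0, 17)]; [:: (0, 18)]; [:: (0, 19)]; [:: (0, 20)]; [:: (0, 21)]; [:: (0, 22)]; [:: (0, 23)]; [:: (0, 24)]; [:: (0, 25)]; [:: (0, 26)]; [:: (0, 27)]; [:: (0, 28)]; [:: (0, 29)]; [:: (0, 30)]; [:: (0, 31)]; [:: (0, 32)]; [:: (0, 33); (1, 31)]; [:: (0, 34)]; [:: (0, 35); (1, 30)]; [:: (0, 36); (1, 29)]; [:: (0, 37); (1, 27)]; [:: (0, 38)]; [:: (0, 39)]; [:: (0, 40)]; [:: (0, 41); (1, 46)]; [:: (0, 42); (1, 49)]; [:: (0, 43); (1, 44); (1, 47); (2, 40)]; [:: (0, 44)]; [:: (0, 45)]; [:: (0, 46)]; [:: (0, 47)]; [:: (0, 48)]; [:: (0, 49)]; [:: (0, 50); (1, 40)]; [:: (0, 51); (1, 38)]; [:: (0, 52); (1, 39)]]; 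
  [:: [:: (0, 0)]; [:: (0, 1)]; [:: (0, 2)]; [:: (0, 3); (1, 32); (2, 5)]; [:: (0, 4); (1, 34); (2, 6)]; [:: (0, 5)]; [:: (0, 6)]; [:: (0, 7)]; [:: (0, 8)]; [:: (0, 9)]; [:: (0, 10); (1, 43); (2, 11)]; [:: (0, 11)]; [:: (0, 12)]; [:: (0, 13)]; [:: (0, 14)]; [:: (0, 15)]; [:: (0, 16)]; [:: (0, 17); (1, 26); (2, 15)]; [:: (0, 18); (1, 28); (2, 16)]; [:: (0, 19)]; [:: (0, 20)]; [:: (0, 21)]; [:: (0, 22)]; [:: (0, 23); (1, 40); (2, 22)]; [:: (0, 24)]; [:: (0, 25)]; [:: (0, 26)]; [:: (0, 27)]; [:: (0, 28)]; [:: (0, 29); (1, 27)]; [:: (0, 30)]; [:: (0, 31); (1, 30)]; [:: (0, 32)]; [:: (0, 33); (1, 35)]; [:: (0, 34)]; [:: (0, 35)]; [:: (0, 36); (1, 37)]; [:: (0, 37)]; [:: (0, 38)]; [:: (0, 39); (1, 38)]; [:: (0, 40)]; [:: (0, 41); (1, 42)]; [:: (0, 42)]; [:: (0, 43)]; [:: (0, 44); (1, 48)]; [:: (0, 45); (1, 44); (1, 47); (2, 48)]; [:: (0, 46); (1, 49)]; [:: (0, 47); (1, 48)]; [:: (0, 48)]; [:: (0, 49)]; [:: (0, 50)]; [:: (0, 51)]; [:: (0, 52); (1, 51)]]; 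
  [:: [:: (0, 0)]; [:: (0, 1)]; [:: (0, 2)]; [:: (0, 3)]; [:: (0, 4)]; [:: (0, 5); (1, 35); (2, 7)]; [:: (0, 6); (1, 37); (2, 9)]; [:: (0, 7)]; [:: (0, 8); (1, 41); (2, 10)]; [:: (0, 9)]; [:: (0, 10)]; [:: (0, 11)]; [:: (0, 12)]; [:: (0, 13)]; [:: (0, 14)]; [:: (0, 15)]; [:: (0, 16)]; [:: (0, 17)]; [:: (0, 18)]; [:: (0, 19); (1, 29); (2, 17)]; [:: (0, 20)]; [:: (0, 21); (1, 31); (2, 18)]; [:: (0, 22); (1, 38); (2, 20)]; [:: (0, 23)]; [:: (0, 24)]; [:: (0, 25)]; [:: (0, 26)]; [:: (0, 27); (1, 26)]; [:: (0, 28)]; [:: (0, 29)]; [:: (0, 30); (1, 28)]; [:: (0, 31)]; [:: (0, 32); (1, 33)]; [:: (0, 33)]; [:: (0, 34); (1, 36)]; [:: (0, 35)]; [:: (0, 36)]; [:: (0, 37)]; [:: (0, 38)]; [:: (0, 39)]; [:: (0, 40); (1, 39)]; [:: (0, 41)]; [:: (0, 42); (1, 43)]; [:: (0, 43)]; [:: (0, 44)]; [:: (0, 45)]; [:: (0, 46); (1, 45)]; [:: (0, 47); (1, 52)]; [:: (0, 48); (1, 51)]; [:: (0, 49); (1, 47); (1, 50); (2, 52)]; [:: (0, 50); (1, 52)]; [:: (0, 51)]; [:: (0, 52)]]; 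
  [:: [:: (0, 0)]; [:: (0, 1)]; [:: (0, 2)]; [:: (0, 3); (1, 33); (2, 7)]; [:: (0, 4); (1, 36); (2, 9)]; [:: (0, 5)]; [:: (0, 6)]; [:: (0, 7)]; [:: (0, 8); (1, 42); (2, 11)]; [:: (0, 9)]; [:: (0, 10)]; [:: (0, 11)]; [:: (0, 12)]; [:: (0, 13)]; [:: (0, 14)]; [:: (0, 15)]; [:: (0, 16)]; [:: (0, 17)]; [:: (0, 18)]; [:: (0, 19); (1, 27); (2, 15)]; [:: (0, 20)]; [:: (0, 21); (1, 30); (2, 16)]; [:: (0, 22)]; [:: (0, 23); (1, 39); (2, 20)]; [:: (0, 24)]; [:: (0, 25)]; [:: (0, 26)]; [:: (0, 27)]; [:: (0, 28)]; [:: (0, 29); (1, 26)]; [:: (0, 30)]; [:: (0, 31); (1, 28)]; [:: (0, 32); (1, 35)]; [:: (0, 33)]; [:: (0, 34); (1, 37)]; [:: (0, 35)]; [:: (0, 36)]; [:: (0, 37)]; [:: (0, 38)]; [:: (0, 39)]; [:: (0, 40); (1, 38)]; [:: (0, 41); (1, 43)]; [:: (0, 42)]; [:: (0, 43)]; [:: (0, 44); (1, 51)]; [:: (0, 45); (1, 52)]; [:: (0, 46); (1, 44); (1, 50); (2, 51)]; [:: (0, 47)]; [:: (0, 48)]; [:: (0, 49); (1, 48)]; [:: (0, 50); (1, 51)]; [:: (0, 51)]; [:: (0, 52)]]; 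
  [:: [:: (0, 0); (1, 32)]; [:: (0, 1)]; [:: (0, 2); (1, 34); (2, 8)]; [:: (0, 3)]; [:: (0, 4)]; [:: (0, 5)]; [:: (0, 6)]; [:: (0, 7)]; [:: (0, 8)]; [:: (0, 9); (1, 43); (2, 12)]; [:: (0, 10)]; [:: (0, 11)]; [:: (0, 12)]; [:: (0, 13)]; [:: (0, 14)]; [:: (0, 15); (1, 48); (2, 5)]; [:: (0, 16)]; [:: (0, 17); (1, 45); (2, 3)]; [:: (0, 18)]; [:: (0, 19)]; [:: (0, 20); (1, 28); (2, 14)]; [:: (0, 21)]; [:: (0, 22)]; [:: (0, 23)]; [:: (0, 24); (1, 40); (2, 21)]; [:: (0, 25)]; [:: (0, 26); (1, 44); (1, 47); (2, 32)]; [:: (0, 27); (1, 49)]; [:: (0, 28)]; [:: (0, 29); (1, 46)]; [:: (0, 30)]; [:: (0, 31)]; [:: (0, 32)]; [:: (0, 33)]; [:: (0, 34)]; [:: (0, 35)]; [:: (0, 36); (1, 41)]; [:: (0, 37); (1, 42)]; [:: (0, 38); (1, 30)]; [:: (0, 39); (1, 31)]; [:: (0, 40)]; [:: (0, 41)]; [:: (0, 42)]; [:: (0, 43)]; [:: (0, 44); (1, 32)]; [:: (0, 45)]; [:: (0, 46)]; [:: (0, 47); (1, 32)]; [:: (0, 48)]; [:: (0, 49)]; [:: (0, 50)]; [:: (0, 51); (1, 35)]; [:: (0, 52); (1, 33)]]; 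
  [:: [:: (0, 0); (1, 33)]; [:: (0, 1)]; [:: (0, 2); (1, 36); (2, 10)]; [:: (0, 3)]; [:: (0, 4)]; [:: (0, 5)]; [:: (0, 6); (1, 42); (2, 12)]; [:: (0, 7)]; [:: (0, 8)]; [:: (0, 9)]; [:: (0, 10)]; [:: (0, 11)]; [:: (0, 12)]; [:: (0, 13)]; [:: (0, 14)]; [:: (0, 15); (1, 51); (2, 7)]; [:: (0, 16)]; [:: (0, 17)]; [:: (0, 18)]; [:: (0, 19); (1, 46); (2, 3)]; [:: (0, 20)]; [:: (0, 21)]; [:: (0, 22); (1, 30); (2, 14)]; [:: (0, 23)]; [:: (0, 24); (1, 39); (2, 18)]; [:: (0, 25)]; [:: (0, 26); (1, 52)]; [:: (0, 27); (1, 44); (1, 50); (2, 33)]; [:: (0, 28)]; [:: (0, 29); (1, 45)]; [:: (0, 30)]; [:: (0, 31)]; [:: (0, 32)]; [:: (0, 33)]; [:: (0, 34); (1, 41)]; [:: (0, 35)]; [:: (0, 36)]; [:: (0, 37); (1, 43)]; [:: (0, 38); (1, 28)]; [:: (0, 39)]; [:: (0, 40); (1, 31)]; [:: (0, 41)]; [:: (0, 42)]; [:: (0, 43)]; [:: (0, 44); (1, 33)]; [:: (0, 45)]; [:: (0, 46)]; [:: (0, 47)]; [:: (0, 48); (1, 35)]; [:: (0, 49); (1, 32)]; [:: (0, 50); (1, 33)]; [:: (0, 51)]; [:: (0, 52)]]; 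
  [:: [:: (0, 0); (1, 34)]; [:: (0, 1); (1, 34)]; [:: (0, 2)]; [:: (0, 3)]; [:: (0, 4)]; [:: (0, 5)]; [:: (0, 6)]; [:: (0, 7); (1, 43); (2, 13)]; [:: (0, 8)]; [:: (0, 9)]; [:: (0, 10)]; [:: (0, 11)]; [:: (0, 12)]; [:: (0, 13)]; [:: (0, 14); (1, 32); (2, 8)]; [:: (0, 15)]; [:: (0, 16); (1, 48); (2, 6)]; [:: (0, 17)]; [:: (0, 18); (1, 45); (2, 4)]; [:: (0, 19)]; [:: (0, 20); (1, 26); (2, 2)]; [:: (0, 21)]; [:: (0, 22)]; [:: (0, 23)]; [:: (0, 24)]; [:: (0, 25); (1, 40); (2, 19)]; [:: (0, 26)]; [:: (0, 27)]; [:: (0, 28); (1, 44); (1, 47); (2, 34)]; [:: (0, 29)]; [:: (0, 30); (1, 49)]; [:: (0, 31); (1, 46)]; [:: (0, 32)]; [:: (0, 33); (1, 41)]; [:: (0, 34)]; [:: (0, 35); (1, 42)]; [:: (0, 36)]; [:: (0, 37)]; [:: (0, 38); (1, 27)]; [:: (0, 39); (1, 29)]; [:: (0, 40)]; [:: (0, 41)]; [:: (0, 42)]; [:: (0, 43)]; [:: (0, 44)]; [:: (0, 45)]; [:: (0, 46)]; [:: (0, 47)]; [:: (0, 48)]; [:: (0, 49)]; [:: (0, 50); (1, 34)]; [:: (0, 51); (1, 37)]; [:: (0, 52); (1, 36)]]; 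
  [:: [:: (0, 0); (1, 35)]; [:: (0, 1)]; [:: (0, 2); (1, 37); (2, 11)]; [:: (0, 3)]; [:: (0, 4); (1, 41); (2, 12)]; [:: (0, 5)]; [:: (0, 6)]; [:: (0, 7)]; [:: (0, 8)]; [:: (0, 9)]; [:: (0, 10)]; [:: (0, 11)]; [:: (0, 12)]; [:: (0, 13)]; [:: (0, 14)]; [:: (0, 15)]; [:: (0, 16)]; [:: (0, 17); (1, 52); (2, 7)]; [:: (0, 18)]; [:: (0, 19); (1, 49); (2, 5)]; [:: (0, 20)]; [:: (0, 21)]; [:: (0, 22)]; [:: (0, 23); (1, 31); (2, 14)]; [:: (0, 24); (1, 38); (2, 16)]; [:: (0, 25)]; [:: (0, 26); (1, 51)]; [:: (0, 27); (1, 48)]; [:: (0, 28)]; [:: (0, 29); (1, 47); (1, 50); (2, 35)]; [:: (0, 30)]; [:: (0, 31)]; [:: (0, 32)]; [:: (0, 33)]; [:: (0, 34); (1, 42)]; [:: (0, 35)]; [:: (0, 36); (1, 43)]; [:: (0, 37)]; [:: (0, 38)]; [:: (0, 39); (1, 28)]; [:: (0, 40); (1, 30)]; [:: (0, 41)]; [:: (0, 42)]; [:: (0, 43)]; [:: (0, 44)]; [:: (0, 45); (1, 33)]; [:: (0, 46); (1, 32)]; [:: (0, 47); (1, 35)]; [:: (0, 48)]; [:: (0, 49)]; [:: (0, 50); (1, 35)]; [:: (0, 51)]; [:: (0, 52)]]; 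
  [:: [:: (0, 0); (1, 36)]; [:: (0, 1); (1, 36)]; [:: (0, 2)]; [:: (0, 3)]; [:: (0, 4)]; [:: (0, 5); (1, 42); (2, 13)]; [:: (0, 6)]; [:: (0, 7)]; [:: (0, 8)]; [:: (0, 9)]; [:: (0, 10)]; [:: (0, 11)]; [:: (0, 12)]; [:: (0, 13)]; [:: (0, 14); (1, 33); (2, 10)]; [:: (0, 15)]; [:: (0, 16); (1, 51); (2, 9)]; [:: (0, 17)]; [:: (0, 18)]; [:: (0, 19)]; [:: (0, 20)]; [:: (0, 21); (1, 46); (2, 4)]; [:: (0, 22); (1, 27); (2, 2)]; [:: (0, 23)]; [:: (0, 24)]; [:: (0, 25); (1, 39); (2, 17)]; [:: (0, 26)]; [:: (0, 27)]; [:: (0, 28); (1, 52)]; [:: (0, 29)]; [:: (0, 30); (1, 44); (1, 50); (2, 36)]; [:: (0, 31); (1, 45)]; [:: (0, 32); (1, 41)]; [:: (0, 33)]; [:: (0, 34)]; [:: (0, 35); (1, 43)]; [:: (0, 36)]; [:: (0, 37)]; [:: (0, 38); (1, 26)]; [:: (0, 39)]; [:: (0, 40); (1, 29)]; [:: (0, 41)]; [:: (0, 42)]; [:: (0, 43)]; [:: (0, 44)]; [:: (0, 45)]; [:: (0, 46)]; [:: (0, 47); (1, 36)]; [:: (0, 48); (1, 37)]; [:: (0, 49); (1, 34)]; [:: (0, 50)]; [:: (0, 51)]; [:: (0, 52)]]; 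
  [:: [:: (0, 0); (1, 37)]; [:: (0, 1); (1, 37)]; [:: (0, 2)]; [:: (0, 3); (1, 41); (2, 13)]; [:: (0, 4)]; [:: (0, 5)]; [:: (0, 6)]; [:: (0, 7)]; [:: (0, 8)]; [:: (0, 9)]; [:: (0, 10)]; [:: (0, 11)]; [:: (0, 12)]; [:: (0, 13)]; [:: (0, 14); (1, 35); (2, 11)]; [:: (0, 15)]; [:: (0, 16)]; [:: (0, 17)]; [:: (0, 18); (1, 52); (2, 9)]; [:: (0, 19)]; [:: (0, 20)]; [:: (0, 21); (1, 49); (2, 6)]; [:: (0, 22)]; [:: (0, 23); (1, 29); (2, 2)]; [:: (0, 24)]; [:: (0, 25); (1, 38); (2, 15)]; [:: (0, 26)]; [:: (0, 27)]; [:: (0, 28); (1, 51)]; [:: (0, 29)]; [:: (0, 30); (1, 48)]; [:: (0, 31); (1, 47); (1, 50); (2, 37)]; [:: (0, 32); (1, 42)]; [:: (0, 33); (1, 43)]; [:: (0, 34)]; [:: (0, 35)]; [:: (0, 36)]; [:: (0, 37)]; [:: (0, 38)]; [:: (0, 39); (1, 26)]; [:: (0, 40); (1, 27)]; [:: (0, 41)]; [:: (0, 42)]; [:: (0, 43)]; [:: (0, 44); (1, 37)]; [:: (0, 45); (1, 36)]; [:: (0, 46); (1, 34)]; [:: (0, 47)]; [:: (0, 48)]; [:: (0, 49)]; [:: (0, 50)]; [:: (0, 51)]; [:: (0, 52)]]; 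
  [:: [:: (0, 0)]; [:: (0, 1); (1, 41)]; [:: (0, 2)]; [:: (0, 3)]; [:: (0, 4)]; [:: (0, 5)]; [:: (0, 6)]; [:: (0, 7)]; [:: (0, 8)]; [:: (0, 9)]; [:: (0, 10)]; [:: (0, 11)]; [:: (0, 12)]; [:: (0, 13)]; [:: (0, 14)]; [:: (0, 15); (1, 37); (2, 13)]; [:: (0, 16); (1, 35); (2, 12)]; [:: (0, 17)]; [:: (0, 18)]; [:: (0, 19)]; [:: (0, 20); (1, 52); (2, 10)]; [:: (0, 21)]; [:: (0, 22); (1, 49); (2, 8)]; [:: (0, 23)]; [:: (0, 24); (1, 29); (2, 4)]; [:: (0, 25); (1, 31); (2, 3)]; [:: (0, 26); (1, 36)]; [:: (0, 27); (1, 34)]; [:: (0, 28); (1, 33)]; [:: (0, 29)]; [:: (0, 30); (1, 32)]; [:: (0, 31)]; [:: (0, 32)]; [:: (0, 33)]; [:: (0, 34)]; [:: (0, 35)]; [:: (0, 36)]; [:: (0, 37)]; [:: (0, 38); (1, 47); (1, 50); (2, 41)]; [:: (0, 39); (1, 45)]; [:: (0, 40); (1, 46)]; [:: (0, 41)]; [:: (0, 42)]; [:: (0, 43)]; [:: (0, 44); (1, 41)]; [:: (0, 45)]; [:: (0, 46)]; [:: (0, 47)]; [:: (0, 48); (1, 42)]; [:: (0, 49)]; [:: (0, 50)]; [:: (0, 51); (1, 43)]; [:: (0, 52)]]; 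
  [:: [:: (0, 0)]; [:: (0, 1); (1, 42)]; [:: (0, 2)]; [:: (0, 3)]; [:: (0, 4)]; [:: (0, 5)]; [:: (0, 6)]; [:: (0, 7)]; [:: (0, 8)]; [:: (0, 9)]; [:: (0, 10)]; [:: (0, 11)]; [:: (0, 12)]; [:: (0, 13)]; [:: (0, 14)]; [:: (0, 15)]; [:: (0, 16)]; [:: (0, 17); (1, 36); (2, 13)]; [:: (0, 18); (1, 33); (2, 12)]; [:: (0, 19)]; [:: (0, 20); (1, 51); (2, 11)]; [:: (0, 21)]; [:: (0, 22)]; [:: (0, 23); (1, 46); (2, 8)]; [:: (0, 24); (1, 27); (2, 6)]; [:: (0, 25); (1, 30); (2, 5)]; [:: (0, 26); (1, 37)]; [:: (0, 27)]; [:: (0, 28); (1, 35)]; [:: (0, 29); (1, 34)]; [:: (0, 30)]; [:: (0, 31); (1, 32)]; [:: (0, 32)]; [:: (0, 33)]; [:: (0, 34)]; [:: (0, 35)]; [:: (0, 36)]; [:: (0, 37)]; [:: (0, 38); (1, 48)]; [:: (0, 39); (1, 44); (1, 50); (2, 42)]; [:: (0, 40); (1, 49)]; [:: (0, 41)]; [:: (0, 42)]; [:: (0, 43)]; [:: (0, 44)]; [:: (0, 45); (1, 41)]; [:: (0, 46)]; [:: (0, 47); (1, 42)]; [:: (0, 48)]; [:: (0, 49)]; [:: (0, 50)]; [:: (0, 51)]; [:: (0, 52); (1, 43)]]; 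
  [:: [:: (0, 0)]; [:: (0, 1); (1, 43)]; [:: (0, 2)]; [:: (0, 3)]; [:: (0, 4)]; [:: (0, 5)]; [:: (0, 6)]; [:: (0, 7)]; [:: (0, 8)]; [:: (0, 9)]; [:: (0, 10)]; [:: (0, 11)]; [:: (0, 12)]; [:: (0, 13)]; [:: (0, 14)]; [:: (0, 15)]; [:: (0, 16)]; [:: (0, 17)]; [:: (0, 18)]; [:: (0, 19); (1, 34); (2, 13)]; [:: (0, 20)]; [:: (0, 21); (1, 32); (2, 12)]; [:: (0, 22); (1, 48); (2, 11)]; [:: (0, 23); (1, 45); (2, 10)]; [:: (0, 24); (1, 26); (2, 9)]; [:: (0, 25); (1, 28); (2, 7)]; [:: (0, 26)]; [:: (0, 27); (1, 37)]; [:: (0, 28)]; [:: (0, 29); (1, 36)]; [:: (0, 30); (1, 35)]; [:: (0, 31); (1, 33)]; [:: (0, 32)]; [:: (0, 33)]; [:: (0, 34)]; [:: (0, 35)]; [:: (0, 36)]; [:: (0, 37)]; [:: (0, 38); (1, 51)]; [:: (0, 39); (1, 52)]; [:: (0, 40); (1, 44); (1, 47); (2, 43)]; [:: (0, 41)]; [:: (0, 42)]; [:: (0, 43)]; [:: (0, 44)]; [:: (0, 45)]; [:: (0, 46); (1, 41)]; [:: (0, 47)]; [:: (0, 48)]; [:: (0, 49); (1, 42)]; [:: (0, 50); (1, 43)]; [:: (0, 51)]; [:: (0, 52)]]].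
Definition rhs (cert : seq (nat * nat)) : seq (nat * (nat * nat)) :=
  flatten [seq [seq (c.1, p) | p <- nth [::] forms c.2] | c <- cert].
Definition leK (x y : nat * (nat * nat)) : bool :=
  (x.1 < y.1)%N || (x.1 == y.1) && ((x.2.1 < y.2.1)%N || (x.2.1 == y.2.1) && (x.2.2 <= y.2.2)%N).
Fixpoint canc (s : seq (nat * (nat * nat))) : seq (nat * (nat * nat)) :=
  match s with
  | [::] => [::]
  | x :: r => match canc r with
              | y :: r' => if x == y then r' else x :: y :: r'
              | [::] => [:: x]
              end
  end.
Definition normQ s := canc (sort leK s).
Definition check_rows (rows : seq (seq (nat * nat))) (cs : seq (seq (nat * nat))) : bool :=
  (size cs == size forms) &&
  all (fun n => (normQ (lhs rows (nth [::] forms n)) == normQ (rhs (nth [::] cs n)))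
                && all (fun c => (c.2 < size forms)%N) (nth [::] cs n)) (iota 0 (size forms)).
Definition check_root (a : seq int) (cs : seq (seq (nat * nat))) : bool :=
  check_rows [seq rowlf a i | i <- iota 0 52] cs.
Definition check_all : bool :=
  (size certs == size F4roots) && all (fun p => check_root p.1 p.2) (zip F4roots certs).
Lemma check_all_ok : check_all = true.
Proof. vm_compute. reflexivity. Qed.

Definition check_base : bool :=
  all (fun g => (28 <= rootIdx g < 52)%N && all (fun f => (rootIdx g, rootIdx g) \notin f) forms) longRoots.
Lemma check_base_ok : check_base = true. Proof. vm_compute. reflexivity. Qed.
Definition check_first : bool :=
  (26 <= size forms)%N && all (fun s => (nth [::] forms s == (s, s) :: behead (nth [::] forms s)) &&
     all (fun p => (26 <= p.1 < 52)%N && (26 <= p.2 < 52)%N && ~~ ((p.1 == p.2) && (28 <= p.1)%N))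
       (behead (nth [::] forms s))) (iota 0 26).
Lemma check_first_ok : check_first = true. Proof. vm_compute. reflexivity. Qed.
Definition check_gs : bool :=
  all (fun a => all (fun i => all (fun l => ~~ oddz (adCoef a i l) && ~~ oddz (ad2Coef a i l)) (iota 0 26)) (iota 26 26)) F4roots.
Lemma check_gs_ok : check_gs = true. Proof. vm_compute. reflexivity. Qed.


Section Sem.
Variable k : fieldType.
Hypothesis ch2 : (2%:R : k) = 0.
Variable t : k.
Variable vf : nat -> k.
Definition ev_lf (l : seq (nat * nat)) : k := \sum_(x <- l) t ^+ x.2 * vf x.1.
Definition ev_q (s : seq (nat * (nat * nat))) : k :=
  \sum_(x <- s) t ^+ x.1 * (vf x.2.1 * vf x.2.2).
Definition ev_form (f : seq (nat * nat)) : k := \sum_(p <- f) vf p.1 * vf p.2.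

Lemma ev_prod l1 l2 : ev_lf l1 * ev_lf l2 = ev_q (prodlf l1 l2).
Proof.
rewrite /ev_q /prodlf big_allpairs_dep /ev_lf big_distrl /=.
apply: eq_bigr => x _; rewrite big_distrr /=; apply: eq_bigr => y _.
rewrite /mk exprD; case: ifP => _ /=; ring.
Qed.

Lemma ev_cat s1 s2 : ev_q (s1 ++ s2) = ev_q s1 + ev_q s2.
Proof. by rewrite /ev_q big_cat. Qed.

Lemma ev_lhs rows f : ev_q (lhs rows f) =
  \sum_(p <- f) ev_lf (nth [::] rows p.1) * ev_lf (nth [::] rows p.2).
Proof.
rewrite /lhs; elim: f => [|p f IH]; first by rewrite /ev_q !big_nil.
by rewrite /= ev_cat IH big_cons ev_prod.
Qed.

Lemma ev_rhs cert : ev_q (rhs cert) =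
  \sum_(c <- cert) t ^+ c.1 * ev_form (nth [::] forms c.2).
Proof.
rewrite /rhs; elim: cert => [|c cs IH]; first by rewrite /ev_q !big_nil.
rewrite /= ev_cat IH big_cons; congr (_ + _).
by rewrite /ev_q /ev_form big_map big_distrr.
Qed.

Lemma ev_sort s : ev_q (sort leK s) = ev_q s.
Proof. by apply: perm_big; rewrite perm_sort. Qed.

Lemma ev_canc s : ev_q (canc s) = ev_q s.
Proof.
elim: s => [|x s IH] //=.
rewrite /ev_q big_cons -/(ev_q s) -IH.
case: (canc s) => [|y r] /=; first by rewrite /ev_q big_seq1 big_nil addr0.
case: eqP => [<-|_]; last by rewrite /ev_q !big_cons.
by rewrite /ev_q big_cons addrA -mulr2n -mulr_natr ch2 mulr0 add0r.
Qed.

Lemma ev_normQ s : ev_q (normQ s) = ev_q s.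
Proof. by rewrite /normQ ev_canc ev_sort. Qed.
End Sem.
Arguments ev_lf {k} t vf l.
Arguments ev_q {k} t vf s.
Arguments ev_form {k} vf f.


Definition vfun {k : fieldType} (v : 'cV[k]_dimg) (j : nat) : k :=
  if insub j is Some i then v i 0 else 0.

Lemma vfunE {k : fieldType} (v : 'cV[k]_dimg) (i : 'I_dimg) : vfun v i = v i 0.
Proof. by rewrite /vfun valK. Qed.

Lemma vfun_out {k : fieldType} (v : 'cV[k]_dimg) j : (dimg <= j)%N -> vfun v j = 0.
Proof. by move=> h; rewrite /vfun insubF // ltnNge h. Qed.


Lemma intr2 (k : fieldType) (ch2 : (2%:R : k) = 0) (z : int) : (z%:~R : k) = (oddz z)%:R.
Proof.
rewrite {1}(divz_eq z 2) rmorphD rmorphM /=.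
rewrite (_ : (2:int)%:~R = 2%:R :> k) // ch2 mulr0 add0r /oddz.
have h0 : (0 <= (z %% 2)%Z)%R by apply: modz_ge0.
have h1 : ((z %% 2)%Z < 2)%R by apply: (ltz_mod z (d:=2)).
move: (z %% 2)%Z h0 h1 => m.
case: m => [[|[|n]]|n] h0 h1.
- by [].
- by [].
- by rewrite ltz_nat in h1.
- by [].
Qed.


Lemma sum_filt (k : fieldType) (t : k) (F : nat -> k) (P : nat -> bool) (d : nat) :
  \sum_(x <- [seq (j, d) | j <- iota 0 52 & P j]) t ^+ x.2 * F x.1
  = \sum_(j < dimg | P j) t ^+ d * F j.
Proof.
rewrite big_map big_filter.
by rewrite (_ : iota 0 52 = index_iota 0 dimg) // big_mkord.
Qed.

Lemma row_gen (k : fieldType) (ch2 : (2%:R : k) = 0) (t : k) (v : 'cV[k]_dimg) (i : 'I_dimg)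
  (A B : 'I_dimg -> int) (P Q : nat -> bool) :
  (forall j : 'I_dimg, oddz (A j) = P j) -> (forall j : 'I_dimg, oddz (B j) = Q j) ->
  \sum_j ((i == j)%:R + t * (A j)%:~R + t ^+ 2 * (B j)%:~R) * v j 0 =
  \sum_(x <- (i : nat, 0%N) :: [seq (j, 1%N) | j <- iota 0 52 & P j]
          ++ [seq (j, 2%N) | j <- iota 0 52 & Q j]) t ^+ x.2 * vfun v x.1.
Proof.
move=> hA hB.
rewrite big_cons big_cat !sum_filt /= expr0 mul1r vfunE.
under eq_bigr => j _ do rewrite !intr2 // !mulrDl.
rewrite !big_split /=.
rewrite addrA; congr (_ + _ + _).
- rewrite (bigD1 i) //= eqxx mul1r big1 ?addr0 // => j /negPf.
  by rewrite eq_sym => ->; rewrite mul0r.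
- rewrite [RHS]big_mkcond /=; apply: eq_bigr => j _.
  by rewrite hA; case: (P j); rewrite ?mulr1 ?mulr0 ?mul0r ?expr1 ?vfunE.
- rewrite [RHS]big_mkcond /=; apply: eq_bigr => j _.
  by rewrite hB; case: (Q j); rewrite ?mulr1 ?mulr0 ?mul0r ?vfunE.
Qed.

Lemma row_ok (k : fieldType) (ch2 : (2%:R : k) = 0) a t (v : 'cV[k]_dimg) (i : 'I_dimg) :
  (xroot a t *m v) i 0 = ev_lf t (vfun v) (rowlf a i).
Proof.
rewrite mxE /ev_lf /rowlf.
rewrite -(@row_gen k ch2 t v i (fun j : 'I_dimg => adCoef a i j) (fun j : 'I_dimg => ad2Coef a i j)
   (fun j => oddz (adCoef a i j)) (fun j => oddz (ad2Coef a i j))) //.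
apply: eq_bigr => j _; rewrite /xroot !mxE.
by [].
Qed.


Definition Rv {k : fieldType} (v : 'cV[k]_dimg) :=
  forall f, f \in forms -> ev_form (vfun v) f = 0.

Lemma vfun_row (k : fieldType) (ch2 : (2%:R : k) = 0) a t (v : 'cV[k]_dimg) j :
  vfun (xroot a t *m v) j = ev_lf t (vfun v) (nth [::] [seq rowlf a i | i <- iota 0 52] j).
Proof.
case: (ltnP j dimg) => hj.
- rewrite (nth_map 0%N) ?size_iota // nth_iota // add0n.
  have -> : j = val (Ordinal hj) by [].
  by rewrite vfunE row_ok.
- by rewrite vfun_out // nth_default ?size_map ?size_iota // /ev_lf big_nil.
Qed.

Lemma inv_step (k : fieldType) (ch2 : (2%:R : k) = 0) a t (v : 'cV[k]_dimg) :
  a \in F4roots -> Rv v -> Rv (xroot a t *m v).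
Proof.
move=> ha hv f hf.
have := check_all_ok; rewrite /check_all => /andP [/eqP hsz /allP hall].
set i := index a F4roots.
have hi : (i < size F4roots)%N by rewrite index_mem.
set cs := nth [::] certs i.
have hmem : (a, cs) \in zip F4roots certs.
  have := @mem_nth _ ([::], [::]) (zip F4roots certs) i.
  by rewrite size_zip hsz minnn nth_zip // nth_index //; apply.
have H : check_root a cs := hall (a, cs) hmem.
move: H; rewrite /check_root /check_rows.
set rows := [seq rowlf a i0 | i0 <- iota 0 52].
move=> /andP [_ /allP hn].
have [n hn' ->] : exists2 n, (n < size forms)%N & f = nth [::] forms n.
  by exists (index f forms); [rewrite index_mem | rewrite nth_index].
move: (hn n); rewrite mem_iota add0n hn' => /(_ isT) /andP [/eqP heq /allP hlt].
have E : ev_form (vfun (xroot a t *m v)) (nth [::] forms n)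
       = ev_q t (vfun v) (lhs rows (nth [::] forms n)).
  by rewrite ev_lhs /ev_form; apply: eq_bigr => p _; rewrite !(@vfun_row k ch2).
rewrite E -(@ev_normQ k ch2) heq (@ev_normQ k ch2) ev_rhs big1_seq // => c /andP [_ hc'].
by rewrite hv ?mulr0 //; apply: mem_nth; exact: hlt.
Qed.


Lemma gs_pres (k : fieldType) (ch2 : (2%:R : k) = 0) (g : 'M[k]_dimg) :
  inG g -> forall i j : 'I_dimg, (dims <= i)%N -> (j < dims)%N -> g i j = 0.
Proof.
elim=> [|a t g' ha _ IH] i j hi hj.
- rewrite mxE; have /negPf -> : i != j.
    by apply/eqP => e; move: hi; rewrite e leqNgt hj.
  by [].
- rewrite mxE big1 // => l _.
  case: (ltnP l dims) => hl; last by rewrite IH // mulr0.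
  have := check_gs_ok; rewrite /check_gs => /allP H1.
  have /allP H2 := H1 a ha.
  have /allP H3 : all (fun l0 => ~~ oddz (adCoef a i l0) && ~~ oddz (ad2Coef a i l0)) (iota 0 26).
    by apply: H2; rewrite mem_iota hi (ltn_ord i).
  have hl' : (l : nat) \in iota 0 26 by rewrite mem_iota hl.
  have /andP [h1 h2] := H3 l hl'.
  rewrite /xroot !mxE !(@intr2 k ch2) (negPf h1) (negPf h2).
  have /negPf -> : i != l by apply/eqP => e; move: hi; rewrite e leqNgt hl.
  by rewrite !mulr0 !addr0 mul0r.
Qed.

Lemma rootIdx_bd {gam} : gam \in longRoots -> (28 <= rootIdx gam < 52)%N.
Proof.
by move=> hg; have := check_base_ok; rewrite /check_base => /allP /(_ gam hg) /andP [].
Qed.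

Lemma vfunX (k : fieldType) gam : gam \in longRoots ->
  forall j, vfun (Xv k gam) j = (j == rootIdx gam)%:R.
Proof.
move=> hg j; have /andP [_ hr] := rootIdx_bd hg.
case: (ltnP j dimg) => hj.
- have -> : j = val (Ordinal hj) by [].
  by rewrite vfunE mxE.
- rewrite vfun_out //; have /negPf -> : j != rootIdx gam.
    by apply/eqP => e; move: hj; rewrite e leqNgt hr.
  by [].
Qed.

Lemma base_R (k : fieldType) gam : gam \in longRoots -> Rv (Xv k gam).
Proof.
move=> hg f hf; rewrite /ev_form big1_seq // => p /andP [_ hp].
have := check_base_ok; rewrite /check_base => /allP /(_ gam hg) /andP [_ /allP /(_ f hf) hn].
rewrite !(@vfunX k gam hg).
case: p hp => p1 p2 hp /=.
case: (eqVneq p1 (rootIdx gam)) => [e1|n1]; last by rewrite mul0r.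
case: (eqVneq p2 (rootIdx gam)) => [e2|n2]; last by rewrite mulr0.
by subst p1 p2; rewrite hp in hn.
Qed.

Lemma orbit_R (k : fieldType) (ch2 : (2%:R : k) = 0) gam (g : 'M[k]_dimg) :
  gam \in longRoots -> inG g -> Rv (g *m Xv k gam).
Proof.
move=> hg; elim=> [|a t g' ha _ IH]; first by rewrite mul1mx; apply: base_R.
by rewrite -mulmxA; apply: (@inv_step k ch2).
Qed.

Lemma key (k : fieldType) gam (u : 'cV[k]_dimg) : gam \in longRoots ->
  Rv u -> (forall i : 'I_dimg, (dims <= i)%N -> u i 0 = Xv k gam i 0) ->
  forall i : 'I_dimg, (i < dims)%N -> u i 0 = 0.
Proof.
move=> hg hR hu i hi.
have /andP [hr1 hr2] := rootIdx_bd hg.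
have := check_first_ok; rewrite /check_first => /andP [hsz /allP hf].
move: (hf i); rewrite mem_iota add0n hi => /(_ isT) /andP [/eqP hfi /allP hrest].
have hin : nth [::] forms i \in forms by apply: mem_nth; apply: leq_trans hsz.
have hv : forall j, (26 <= j < 52)%N -> vfun u j = (j == rootIdx gam)%:R.
  move=> j /andP [h1 h2].
  have -> : j = val (Ordinal h2) by [].
  by rewrite vfunE hu // mxE.
have := hR _ hin; rewrite hfi /ev_form big_cons big1_seq ?addr0.
- by rewrite /= vfunE => /eqP; rewrite mulf_eq0 orbb => /eqP.
- move=> p /andP [_ hp]; move: (hrest p hp) => /andP [/andP [hp1 hp2] hp3].
  rewrite (hv _ hp1) (hv _ hp2).
  case: (eqVneq p.1 (rootIdx gam)) => [e1|n1]; last by rewrite mul0r.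
  case: (eqVneq p.2 (rootIdx gam)) => [e2|n2]; last by rewrite mulr0.
  by move: hp3; rewrite e1 e2 eqxx hr1.
Qed.

Theorem mainTheorem18 (k : closedFieldType) (char2 : (2 \in [pchar k])%N)
  (alg_over_F2 : forall a : k, exists n : nat, (0 < n)%N /\ a ^+ (2 ^ n) = a)
  (gam : seq int) (hgam : gam \in longRoots)
  (x : 'cV[k]_dimg) (hx : in_gs x) (lam : k) :
  forall g : 'M[k]_dimg,
    stab_g (x + lam *: Xv k gam) g <-> stab_V (gs_to_V x + lam *: vV k gam) g.
Proof.
have ch2 : (2%:R : k) = 0 := pcharf0 char2.
move=> g.
have hgs : gs_to_V x = x.
  apply/matrixP => i j; rewrite !mxE (ord1 j); case: ifP => // /negbT.
  by rewrite -leqNgt => h; rewrite hx.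
rewrite /stab_g /stab_V hgs (_ : vV k gam = Xv k gam) //.
set X := Xv k gam; set w := x + lam *: X.
have /andP [hr1 hr2] := rootIdx_bd hgam.
have X0 : forall j : 'I_dimg, (j < dims)%N -> X j 0 = 0.
  move=> j hj; rewrite mxE; have /negPf -> : (j : nat) != rootIdx gam.
    by apply/eqP => e; move: hj; rewrite e ltnNge (leq_trans _ hr1).
  by [].
have A : inG g -> forall i : 'I_dimg, (dims <= i)%N -> (g *m x) i 0 = 0.
  move=> hG i hi; rewrite mxE big1 // => j _.
  case: (ltnP j dims) => hj; first by rewrite (@gs_pres k ch2 g hG) // mul0r.
  by rewrite hx // mulr0.
have D : forall i, (g *m w) i 0 = (g *m x) i 0 + lam * (g *m X) i 0.
  by move=> i; rewrite /w mulmxDr -scalemxAr !mxE.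
have B : forall i : 'I_dimg, (i < dims)%N -> (actV g *m w) i 0 = (g *m x) i 0.
  move=> i hi; rewrite !mxE; apply: eq_bigr => j _.
  rewrite !mxE hi; case: (ltnP j dims) => hj.
  - have /negPf -> : (j : nat) != rootIdx gam.
      by apply/eqP => e; move: hj; rewrite e ltnNge (leq_trans _ hr1).
    by rewrite eqxx mulr0 addr0.
  - by rewrite /= mul0r hx // mulr0.
have C : inG g -> forall i : 'I_dimg, (dims <= i)%N -> (actV g *m w) i 0 = lam * (g *m X) i 0.
  move=> hG i hi; rewrite !mxE big_distrr /=; apply: eq_bigr => j _.
  rewrite !mxE (_ : (i < dims)%N = false); last by rewrite ltnNge hi.
  case: (ltnP j dims) => hj.
  - by rewrite /= (@gs_pres k ch2 g hG) // !mul0r mulr0.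
  - by rewrite /= hx // add0r mulrCA.
have wl : forall i : 'I_dimg, (dims <= i)%N -> w i 0 = lam * X i 0.
  by move=> i hi; rewrite !mxE hx // add0r.
have E : inG g -> (forall i : 'I_dimg, (dims <= i)%N -> lam * (g *m X) i 0 = lam * X i 0) ->
    g *m w = actV g *m w.
  move=> hG hK; apply/matrixP => i j; rewrite (ord1 j).
  have hK2 : forall i : 'I_dimg, (i < dims)%N -> lam * (g *m X) i 0 = 0.
    move=> i0 hi0; case: (eqVneq lam 0) => [->|hl]; first by rewrite mul0r.
    rewrite (@key k gam (g *m X) hgam (@orbit_R k ch2 gam g hgam hG)) ?mulr0 //.
    by move=> i1 hi1; apply: (mulfI hl); apply: hK.
  case: (ltnP i dims) => hi.
  - by rewrite D B // hK2 // addr0.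
  - by rewrite D C // A // add0r.
split => [[hG hfix]|[hG hfix]]; split => //.
- rewrite -(E hG) //.
  by move=> i hi; rewrite -wl // -hfix D A // add0r.
- rewrite (E hG) //.
  by move=> i hi; rewrite -wl // -hfix C.
Qed.
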